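(* For $|q|<1$, \begin{align*} \sum_{i,j,k\geq 0}\frac{q^{2i^2+j^2+k^2+2ij+2ik+k}}{(q^2;q^2)_i(q^2;q^2)_j(q^2;q^2)_k}&=\frac{(q^3,q^4,q^7;q^7)_\infty}{(q;q)_\infty}, \\ \sum_{i,j,k\geq 0} \frac{q^{2i^2+j^2+k^2+2ij+2ik+2i+j}}{(q^2;q^2)_i(q^2;q^2)_j(q^2;q^2)_k}&=\frac{(q^2,q^5,q^7;q^7)_\infty}{(q;q)_\infty}, \\ \sum_{i,j,k\geq 0} \frac{q^{2i^2+j^2+k^2+2ij+2ik+2i+j+2k}}{(q^2;q^2)_i(q^2;q^2)_j(q^2;q^2)_k}&=\frac{(q,q^6,q^7;q^7)_\infty}{(q;q)_\infty}. \end{align*}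
   Context: For $|q|<1$: $(a;q)_n=\prod_{k=0}^{n-1}(1-aq^k)$ ($(a;q)_0=1$), $(a;q)_\infty=\prod_{k\ge0}(1-aq^k)$, $(a_1,\dots,a_m;q)_\infty=\prod_\ell(a_\ell;q)_\infty$. *)

(* Defs.v *)
From Stdlib Require Import Reals.
From Coquelicot Require Import Coquelicot.
Open Scope C_scope.

Fixpoint qpoch (a q : C) (n : nat) : C :=
  match n with
  | O => 1
  | S m => qpoch a q m * (1 - a * pow_n q m)
  end.

Definition is_qpoch_inf (a q p : C) : Prop :=
  filterlim (fun n => qpoch a q n) eventually (locally p).

(* the triple series sum_{i,j,k>=0} t i j k converges (as an iterated
   series, the innermost over k) with value s *)
Definition is_series3 (t : nat -> nat -> nat -> C) (s : C) : Prop :=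
  exists f : nat -> C,
    (forall i, exists g : nat -> C,
        (forall j, is_series (fun k => t i j k) (g j)) /\ is_series g (f i))
    /\ is_series f s.

(* Main.v *)
Require Import Defs.
From Stdlib Require Import Reals Lia Lra.
From Coquelicot Require Import Coquelicot.
Open Scope C_scope.

Fixpoint fsum (f : nat -> C) (n : nat) : C :=
  match n with O => 0 | S m => fsum f m + f m end.
Fixpoint fsumR (f : nat -> R) (n : nat) : R :=
  match n with O => 0%R | S m => (fsumR f m + f m)%R end.
Fixpoint prodR (f : nat -> R) (n : nat) : R :=
  match n with O => 1%R | S m => (prodR f m * f m)%R end.
Fixpoint prodC (f : nat -> C) (n : nat) : C :=
  match n with O => 1 | S m => prodC f m * f m end.

Lemma fsum_ext f g n : (forall k, (k < n)%nat -> f k = g k) -> fsum f n = fsum g n.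
Proof. induction n; simpl; intros; auto. rewrite IHn by (intros; apply H; lia). rewrite H by lia. auto. Qed.
Lemma fsumR_ext f g n : (forall k, (k < n)%nat -> f k = g k) -> fsumR f n = fsumR g n.
Proof. induction n; simpl; intros; auto. rewrite IHn by (intros; apply H; lia). rewrite H by lia. auto. Qed.
Lemma fsum_plus f g n : fsum (fun k => f k + g k) n = fsum f n + fsum g n.
Proof. induction n; simpl. ring. rewrite IHn. ring. Qed.
Lemma fsum_scal c f n : fsum (fun k => c * f k) n = c * fsum f n.
Proof. induction n; simpl. ring. rewrite IHn. ring. Qed.
Lemma fsum_split f a b : fsum f (a + b) = fsum f a + fsum (fun k => f (a + k)%nat) b.
Proof. induction b; simpl. rewrite Nat.add_0_r. ring. rewrite Nat.add_succ_r. simpl. rewrite IHb. ring. Qed.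
Lemma fsumR_split f a b : fsumR f (a + b) = (fsumR f a + fsumR (fun k => f (a + k)%nat) b)%R.
Proof. induction b; simpl. rewrite Nat.add_0_r. ring. rewrite Nat.add_succ_r. simpl. rewrite IHb. ring. Qed.
Lemma fsum_shift1 f n : fsum f (S n) = f O + fsum (fun k => f (S k)) n.
Proof. induction n. simpl. ring. change (fsum f (S (S n))) with (fsum f (S n) + f (S n)). rewrite IHn. simpl. ring. Qed.
Lemma fsum_tele (G : nat -> C) n : fsum (fun k => G (S k) - G k) n = G n - G O.
Proof. induction n; simpl. ring. rewrite IHn. ring. Qed.
Lemma fsum_Cmod f n : (Cmod (fsum f n) <= fsumR (fun k => Cmod (f k)) n)%R.
Proof. induction n; simpl. rewrite Cmod_0; lra. eapply Rle_trans. apply Cmod_triangle. lra. Qed.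
Lemma fsumR_le f g n : (forall k, (k < n)%nat -> f k <= g k)%R -> (fsumR f n <= fsumR g n)%R.
Proof. induction n; simpl; intros. lra. assert (f n <= g n)%R by (apply H; lia). assert (fsumR f n <= fsumR g n)%R by (apply IHn; intros; apply H; lia). lra. Qed.
Lemma fsumR_nonneg f n : (forall k, 0 <= f k)%R -> (0 <= fsumR f n)%R.
Proof. intros H. induction n; simpl. lra. specialize (H n). lra. Qed.
Lemma fsumR_scal c f n : fsumR (fun k => c * f k)%R n = (c * fsumR f n)%R.
Proof. induction n; simpl. ring. rewrite IHn. ring. Qed.
Lemma fsumR_mono f a b : (forall k, 0 <= f k)%R -> (a <= b)%nat -> (fsumR f a <= fsumR f b)%R.
Proof. intros. replace b with (a + (b - a))%nat by lia. rewrite fsumR_split.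
  assert (0 <= fsumR (fun k : nat => f (a + k)%nat) (b - a))%R by (apply fsumR_nonneg; auto). lra. Qed.

Fixpoint cp (x : C) (n : nat) : C := match n with O => 1 | S m => x * cp x m end.
Lemma pow_n_cp x n : pow_n x n = cp x n.
Proof. induction n. reflexivity. simpl. rewrite <- IHn. reflexivity. Qed.
Fixpoint qp (a q : C) (n : nat) : C :=
  match n with O => 1 | S m => qp a q m * (1 - a * cp q m) end.
Lemma qpoch_qp a q n : qpoch a q n = qp a q n.
Proof. induction n. reflexivity. simpl. rewrite IHn, pow_n_cp. reflexivity. Qed.

Lemma cp_add (x : C) a b : cp x (a + b) = cp x a * cp x b.
Proof. induction a; simpl. ring. rewrite IHa. ring. Qed.
Lemma cp_mul (x : C) a b : cp x (a * b) = cp (cp x a) b.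
Proof. induction b. rewrite Nat.mul_0_r. reflexivity. rewrite Nat.mul_succ_r, cp_add, IHb. simpl. ring. Qed.
Lemma cp_Cmod (x : C) n : Cmod (cp x n) = (Cmod x ^ n)%R.
Proof. induction n. simpl. apply Cmod_1. simpl cp. rewrite Cmod_mult, IHn. simpl. ring. Qed.
Lemma cp_mult (x y : C) n : cp (x * y) n = cp x n * cp y n.
Proof. induction n; simpl. ring. rewrite IHn. ring. Qed.
Lemma cp_nz (x : C) n : x <> 0 -> cp x n <> 0.
Proof. intros H. induction n; simpl. intro E. apply (f_equal Cmod) in E. rewrite Cmod_1, Cmod_0 in E. lra.
  apply Cmult_neq_0; auto. Qed.
Lemma cp_one n : cp 1 n = 1.
Proof. induction n; simpl. auto. rewrite IHn. ring. Qed.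
Lemma cp_S x n : cp x (S n) = x * cp x n.
Proof. reflexivity. Qed.

Lemma Cmod_lt_pow_ne1 (x : C) n : (Cmod x < 1)%R -> (0 < n)%nat -> 1 - cp x n <> 0.
Proof. intros H Hn E. assert (cp x n = 1). { apply (f_equal (fun z => 1 - z)) in E.
  replace (1 - (1 - cp x n)) with (cp x n) in E by ring. rewrite E. ring. }
  apply (f_equal Cmod) in H0. rewrite cp_Cmod, Cmod_1 in H0.
  assert (0 <= Cmod x)%R by apply Cmod_ge_0.
  assert (Cmod x ^ n < 1)%R. { destruct n. lia. destruct (Req_dec (Cmod x) 0). rewrite H2. simpl. lra.
   apply pow_lt_1_compat; [lra|lia]. } lra. Qed.

Definition limC (u : nat -> C) (l : C) : Prop :=
  forall eps : R, (0 < eps)%R -> exists N, forall n, (N <= n)%nat -> (Cmod (u n - l) < eps)%R.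
Definition serC (f : nat -> C) (l : C) : Prop := limC (fsum f) l.

Lemma limC_filterlim u l : limC u l -> filterlim u eventually (locally l).
Proof. intros H. apply (proj2 (@filterlim_locally_ball_norm C_AbsRing nat C_NormedModule eventually _ _ _)). intros eps. destruct (H eps (cond_pos eps)) as [N HN].
  exists N. intros n Hn. unfold ball_norm. change (Cmod (u n - l) < eps)%R. apply HN. lia. Qed.

Lemma sum_n_fsum f n : sum_n f n = fsum f (S n).
Proof. induction n. rewrite sum_O. simpl. symmetry. apply Cplus_0_l. rewrite sum_Sn, IHn. reflexivity. Qed.

Lemma serC_is_series f l : serC f l -> is_series f l.
Proof. intros H. unfold is_series. apply (proj2 (@filterlim_locally_ball_norm C_AbsRing nat C_NormedModule eventually _ _ _)). intros eps. destruct (H eps (cond_pos eps)) as [N HN].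
  exists N. intros n Hn. unfold ball_norm. rewrite sum_n_fsum. change (Cmod (fsum f (S n) - l) < eps)%R. apply HN. lia. Qed.

Lemma Cmod_sub_sym a b : Cmod (a - b) = Cmod (b - a).
Proof. replace (a - b) with (- (b - a)) by ring. apply Cmod_opp. Qed.
Lemma Cmod_tri3 a b c : (Cmod (a - c) <= Cmod (a - b) + Cmod (b - c))%R.
Proof. replace (a - c) with ((a - b) + (b - c)) by ring. apply Cmod_triangle. Qed.

Lemma limC_const c : limC (fun _ => c) c.
Proof. intros eps He. exists O. intros. replace (c - c) with (RtoC 0) by ring. rewrite Cmod_0. auto. Qed.

Lemma limC_ext u v l : (exists N, forall n, (N <= n)%nat -> u n = v n) -> limC u l -> limC v l.
Proof. intros [N0 H0] H eps He. destruct (H eps He) as [N HN]. exists (max N N0). intros n Hn.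
  rewrite <- H0 by lia. apply HN. lia. Qed.

Lemma limC_plus u v a b : limC u a -> limC v b -> limC (fun n => u n + v n) (a + b).
Proof. intros Hu Hv eps He. destruct (Hu (eps/2)%R) as [N1 H1]. lra. destruct (Hv (eps/2)%R) as [N2 H2]. lra.
  exists (max N1 N2). intros n Hn. specialize (H1 n ltac:(lia)). specialize (H2 n ltac:(lia)).
  replace (u n + v n - (a + b)) with ((u n - a) + (v n - b)) by ring.
  eapply Rle_lt_trans. apply Cmod_triangle. lra. Qed.

Lemma limC_opp u a : limC u a -> limC (fun n => - u n) (- a).
Proof. intros Hu eps He. destruct (Hu eps He) as [N H]. exists N. intros n Hn.
  replace (- u n - - a) with (- (u n - a)) by ring. rewrite Cmod_opp. auto. Qed.

Lemma limC_minus u v a b : limC u a -> limC v b -> limC (fun n => u n - v n) (a - b).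
Proof. intros. apply limC_plus; auto. apply limC_opp; auto. Qed.

Lemma limC_bounded u a : limC u a -> exists B, (0 < B)%R /\ forall n, (Cmod (u n) <= B)%R.
Proof. intros H. destruct (H 1%R ltac:(lra)) as [N HN].
  assert (exists B, (0 < B)%R /\ forall n, (n < N)%nat -> (Cmod (u n) <= B)%R) as [B [HB HBn]].
  { clear HN. induction N. exists 1%R. split. lra. intros; lia.
    destruct IHN as [B [HB HBn]]. exists (Rmax B (Cmod (u N))). split. apply Rlt_le_trans with B; auto. apply Rmax_l.
    intros n Hn. destruct (Nat.eq_dec n N). subst. apply Rmax_r. eapply Rle_trans. apply HBn. lia. apply Rmax_l. }
  exists (Rmax B (Cmod a + 1)). split. apply Rlt_le_trans with B; auto. apply Rmax_l.
  intros n. destruct (Nat.lt_ge_cases n N). eapply Rle_trans. apply HBn; auto. apply Rmax_l.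
  eapply Rle_trans. 2: apply Rmax_r. specialize (HN n H0).
  replace (u n) with ((u n - a) + a) by ring. eapply Rle_trans. apply Cmod_triangle. lra. Qed.

Lemma limC_mult u v a b : limC u a -> limC v b -> limC (fun n => u n * v n) (a * b).
Proof. intros Hu Hv. destruct (limC_bounded u a Hu) as [B [HB HBn]].
  intros eps He. set (e1 := (eps / (2 * (Cmod b + 1)))%R). set (e2 := (eps / (2 * B))%R).
  assert (0 <= Cmod b)%R by apply Cmod_ge_0.
  assert (0 < e1)%R by (unfold e1; apply Rdiv_lt_0_compat; lra).
  assert (0 < e2)%R by (unfold e2; apply Rdiv_lt_0_compat; lra).
  destruct (Hu e1 H0) as [N1 HN1]. destruct (Hv e2 H1) as [N2 HN2].
  exists (max N1 N2). intros n Hn. specialize (HN1 n ltac:(lia)). specialize (HN2 n ltac:(lia)).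
  replace (u n * v n - a * b) with (u n * (v n - b) + (u n - a) * b) by ring.
  eapply Rle_lt_trans. apply Cmod_triangle. rewrite !Cmod_mult.
  assert (Cmod (u n) * Cmod (v n - b) <= B * e2)%R.
  { apply Rmult_le_compat; try apply Cmod_ge_0; auto. lra. }
  assert (Cmod (u n - a) * Cmod b <= e1 * (Cmod b + 1))%R.
  { apply Rmult_le_compat; try apply Cmod_ge_0; lra. }
  assert (B * e2 = eps / 2)%R by (unfold e2; field; lra).
  assert (e1 * (Cmod b + 1) = eps / 2)%R by (unfold e1; field; lra).
  assert (Cmod (u n - a) * Cmod b < e1 * (Cmod b + 1))%R.
  { apply Rle_lt_trans with (e1 * Cmod b)%R. apply Rmult_le_compat_r; try apply Cmod_ge_0; lra.
    apply Rmult_lt_compat_l; lra. }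
  lra. Qed.

Lemma limC_scal c u a : limC u a -> limC (fun n => c * u n) (c * a).
Proof. intros. apply limC_mult; auto. apply limC_const. Qed.

Lemma limC_unique u a b : limC u a -> limC u b -> a = b.
Proof. intros Ha Hb. destruct (Ceq_dec a b) as [E|E]; auto. exfalso.
  assert (0 < Cmod (a - b))%R. { apply Cmod_gt_0. intro Z. apply E. replace a with ((a - b) + b) by ring. rewrite Z. ring. }
  destruct (Ha (Cmod (a - b) / 2)%R) as [N1 H1]. lra. destruct (Hb (Cmod (a - b) / 2)%R) as [N2 H2]. lra.
  specialize (H1 (max N1 N2) ltac:(lia)). specialize (H2 (max N1 N2) ltac:(lia)).
  assert (H3 : (Cmod (a - b) <= Cmod (a - u (max N1 N2)) + Cmod (u (max N1 N2) - b))%R) by apply Cmod_tri3.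
  rewrite Cmod_sub_sym in H1. lra. Qed.

Lemma limC_inv u a : limC u a -> a <> 0 -> limC (fun n => / u n) (/ a).
Proof. intros Hu Ha. assert (HA : (0 < Cmod a)%R) by (apply Cmod_gt_0; auto).
  intros eps He. set (e := Rmin (Cmod a / 2) (eps * Cmod a * Cmod a / 2)).
  assert (0 < e)%R. { unfold e. apply Rmin_case; try lra. apply Rdiv_lt_0_compat; try lra. apply Rmult_lt_0_compat; auto. apply Rmult_lt_0_compat; auto. }
  destruct (Hu e H) as [N HN]. exists N. intros n Hn. specialize (HN n Hn).
  assert (Cmod a <= Cmod (a - u n) + Cmod (u n))%R. { replace a with ((a - u n) + u n) at 1 by ring. apply Cmod_triangle. }
  rewrite Cmod_sub_sym in H0. assert (e <= Cmod a / 2)%R by apply Rmin_l.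
  assert (Cmod (u n) >= Cmod a / 2)%R by lra.
  assert (Hun : u n <> 0). { intro Z. rewrite Z, Cmod_0 in H2. lra. }
  replace (/ u n - / a) with ((a - u n) / (u n * a)) by (field; auto).
  rewrite Cmod_div by (apply Cmult_neq_0; auto). rewrite Cmod_mult. rewrite Cmod_sub_sym.
  apply Rmult_lt_reg_r with (Cmod (u n) * Cmod a)%R. apply Rmult_lt_0_compat; lra.
  unfold Rdiv. rewrite Rmult_assoc, Rinv_l. 2: { apply Rgt_not_eq. apply Rmult_lt_0_compat; lra. }
  rewrite Rmult_1_r. assert (e <= eps * Cmod a * Cmod a / 2)%R by apply Rmin_r.
  assert (eps * (Cmod a / 2) * Cmod a <= eps * Cmod (u n) * Cmod a)%R.
  { apply Rmult_le_compat_r. lra. apply Rmult_le_compat_l; lra. }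
  lra. Qed.

Lemma limC_sub u a (h : nat -> nat) : limC u a -> (forall n, (n <= h n)%nat) -> limC (fun n => u (h n)) a.
Proof. intros H Hh eps He. destruct (H eps He) as [N HN]. exists N. intros n Hn. apply HN. specialize (Hh n). lia. Qed.

Lemma limC_fsum (f : nat -> nat -> C) (g : nat -> C) K :
  (forall k, (k < K)%nat -> limC (fun N => f N k) (g k)) -> limC (fun N => fsum (f N) K) (fsum g K).
Proof. induction K; intros H. simpl. apply limC_const. simpl. apply limC_plus. apply IHK. intros; apply H; lia. apply H. lia. Qed.

Lemma limC_prod (f : nat -> nat -> C) (g : nat -> C) K :
  (forall k, (k < K)%nat -> limC (fun N => f N k) (g k)) -> limC (fun N => prodC (f N) K) (prodC g K).
Proof. induction K; intros H. simpl. apply limC_const. simpl. apply limC_mult. apply IHK. intros; apply H; lia. apply H. lia. Qed.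

Lemma Cmod_le_re_im (z : C) : (Cmod z <= 2 * (Rabs (fst z) + Rabs (snd z)))%R.
Proof. eapply Rle_trans. apply Cmod_2Rmax. assert (sqrt 2 <= 2)%R. { rewrite <- (sqrt_square 2) at 2 by lra. apply sqrt_le_1; lra. }
  assert (0 <= Rabs (fst z))%R by apply Rabs_pos. assert (0 <= Rabs (snd z))%R by apply Rabs_pos.
  assert (Rmax (Rabs (fst z)) (Rabs (snd z)) <= Rabs (fst z) + Rabs (snd z))%R by (apply Rmax_lub; lra).
  assert (0 <= sqrt 2)%R by apply sqrt_pos.
  apply Rmult_le_compat; try lra. apply Rle_trans with (Rabs (fst z)); auto. apply Rmax_l. Qed.

Lemma cauchyC (u : nat -> C) :
  (forall eps, (0 < eps)%R -> exists N, forall n m, (N <= n)%nat -> (N <= m)%nat -> (Cmod (u n - u m) < eps)%R) ->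
  exists l, limC u l.
Proof. intros H.
  assert (Hre : Cauchy_crit (fun n => fst (u n))).
  { intros eps He. destruct (H eps He) as [N HN]. exists N. intros n m Hn Hm. unfold Rdist.
    eapply Rle_lt_trans. 2: apply (HN n m); lia. change (fst (u n) - fst (u m))%R with (Re (u n - u m)). apply re_le_Cmod. }
  assert (Him : Cauchy_crit (fun n => snd (u n))).
  { intros eps He. destruct (H eps He) as [N HN]. exists N. intros n m Hn Hm. unfold Rdist.
    eapply Rle_lt_trans. 2: apply (HN n m); lia. change (snd (u n) - snd (u m))%R with (Im (u n - u m)).
    eapply Rle_trans. 2: apply Rmax_Cmod. apply Rmax_r. }
  destruct (Rcomplete.R_complete _ Hre) as [lr Hlr]. destruct (Rcomplete.R_complete _ Him) as [li Hli].
  exists (lr, li). intros eps He. destruct (Hlr (eps/4)%R) as [N1 H1]. lra. destruct (Hli (eps/4)%R) as [N2 H2]. lra.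
  exists (max N1 N2). intros n Hn. specialize (H1 n ltac:(lia)). specialize (H2 n ltac:(lia)). unfold Rdist in *.
  eapply Rle_lt_trans. apply Cmod_le_re_im. simpl. unfold Rminus in *. lra. Qed.


Definition summR (M : nat -> R) : Prop :=
  (forall k, 0 <= M k)%R /\
  forall eps, (0 < eps)%R -> exists K, forall a b, (K <= a)%nat -> (fsumR (fun k => M (a + k)%nat) b < eps)%R.

Lemma summR_le_ev (M M' : nat -> R) K0 :
  (forall k, 0 <= M' k)%R -> (forall k, (K0 <= k)%nat -> M' k <= M k)%R -> summR M -> summR M'.
Proof. intros H0 Hle [HM HT]. split; auto. intros eps He. destruct (HT eps He) as [K HK].
  exists (max K K0). intros a b Ha. eapply Rle_lt_trans. 2: apply (HK a b); lia.
  apply fsumR_le. intros. apply Hle. lia. Qed.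

Lemma summR_le (M M' : nat -> R) :
  (forall k, 0 <= M' k)%R -> (forall k, M' k <= M k)%R -> summR M -> summR M'.
Proof. intros. apply summR_le_ev with M O; auto. Qed.

Lemma summR_scal (M : nat -> R) c : (0 <= c)%R -> summR M -> summR (fun k => c * M k)%R.
Proof. intros Hc [HM HT]. split. intros; apply Rmult_le_pos; auto.
  intros eps He. destruct (HT (eps / (c + 1))%R) as [K HK]. apply Rdiv_lt_0_compat; lra.
  exists K. intros a b Ha. rewrite fsumR_scal. specialize (HK a b Ha).
  assert (0 <= fsumR (fun k => M (a + k)%nat) b)%R by (apply fsumR_nonneg; auto).
  apply Rle_lt_trans with ((c + 1) * fsumR (fun k : nat => M (a + k)%nat) b)%R. apply Rmult_le_compat_r; lra.
  apply Rmult_lt_reg_l with (/ (c+1))%R. apply Rinv_0_lt_compat; lra.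
  rewrite <- Rmult_assoc, Rinv_l by lra. rewrite Rmult_1_l. unfold Rdiv in HK. rewrite Rmult_comm. auto. Qed.

Lemma fsumR_plus f g n : fsumR (fun k => f k + g k)%R n = (fsumR f n + fsumR g n)%R.
Proof. induction n; simpl. ring. rewrite IHn. ring. Qed.

Lemma summR_plus (M M' : nat -> R) : summR M -> summR M' -> summR (fun k => M k + M' k)%R.
Proof. intros [H1 T1] [H2 T2]. split. intros; specialize (H1 k); specialize (H2 k); lra.
  intros eps He. destruct (T1 (eps/2)%R) as [K1 HK1]. lra. destruct (T2 (eps/2)%R) as [K2 HK2]. lra.
  exists (max K1 K2). intros a b Ha. rewrite fsumR_plus. specialize (HK1 a b ltac:(lia)). specialize (HK2 a b ltac:(lia)). lra. Qed.

Lemma geom_sum r a b : r <> 1%R -> fsumR (fun k => r ^ (a + k))%R b = (r ^ a * (1 - r ^ b) / (1 - r))%R.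
Proof. intros Hr. induction b; simpl. field. intro. apply Hr. lra. rewrite IHb.
  rewrite pow_add. field. intro; apply Hr; lra. Qed.

Lemma summR_geom r : (0 <= r < 1)%R -> summR (fun k => r ^ k)%R.
Proof. intros Hr. split. intros; apply pow_le; lra.
  intros eps He. destruct (pow_lt_1_zero r ltac:(rewrite Rabs_pos_eq; lra) (eps * (1 - r) / 2)%R) as [K HK].
  { apply Rdiv_lt_0_compat; try lra. apply Rmult_lt_0_compat; lra. }
  exists K. intros a b Ha. rewrite geom_sum by lra. specialize (HK a Ha). rewrite Rabs_pos_eq in HK by (apply pow_le; lra).
  assert (0 <= r ^ b <= 1)%R. { split. apply pow_le; lra. destruct b. simpl; lra. left. apply pow_lt_1_compat; [lra|lia]. }
  assert (0 <= r ^ a)%R by (apply pow_le; lra).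
  apply Rle_lt_trans with (r ^ a / (1 - r))%R. unfold Rdiv. apply Rmult_le_compat_r. left; apply Rinv_0_lt_compat; lra.
  assert (r ^ a * (1 - r ^ b) <= r ^ a * 1)%R by (apply Rmult_le_compat_l; lra). lra.
  apply Rmult_lt_reg_r with (1 - r)%R. lra. unfold Rdiv. rewrite Rmult_assoc, Rinv_l by lra. lra. Qed.

Lemma pow_half_bound (M : nat -> R) K0 :
  (forall k, 0 <= M k)%R -> (forall k, (K0 <= k)%nat -> M (S k) <= M k / 2)%R ->
  forall j, (M (K0 + j)%nat <= M K0 * (/2) ^ j)%R.
Proof. intros H0 H j. induction j. rewrite Nat.add_0_r. simpl. lra.
  rewrite Nat.add_succ_r. eapply Rle_trans. apply H. lia. simpl. lra. Qed.

Lemma summR_ratio (M : nat -> R) K0 :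
  (forall k, 0 <= M k)%R -> (forall k, (K0 <= k)%nat -> M (S k) <= M k / 2)%R -> summR M.
Proof. intros H0 H. apply summR_le_ev with (fun k => M K0 * 2 ^ K0 * (/2) ^ k)%R K0; auto.
  intros k Hk. replace k with (K0 + (k - K0))%nat by lia. eapply Rle_trans. apply pow_half_bound; auto.
  rewrite pow_add. rewrite <- Rmult_assoc. rewrite (Rmult_assoc (M K0)). rewrite <- Rpow_mult_distr.
  replace (2 * / 2)%R with 1%R by field. rewrite pow1. lra.
  apply summR_scal. apply Rmult_le_pos; auto. apply pow_le; lra. apply summR_geom. lra. Qed.

Fixpoint tri (k : nat) : nat := match k with O => O | S j => (tri j + j)%nat end.
Lemma tri_eq k : (2 * tri k + k = k * k)%nat.
Proof. induction k; simpl; lia. Qed.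

Lemma summR_quad (A r s : R) : (0 <= A)%R -> (0 <= r < 1)%R -> (0 <= s)%R -> summR (fun k => A * r ^ (tri k) * s ^ k)%R.
Proof. intros HA Hr Hs. destruct (pow_lt_1_zero r ltac:(rewrite Rabs_pos_eq; lra) (/ (2 * (s + 1)))%R) as [K HK].
  { apply Rinv_0_lt_compat; lra. }
  apply summR_ratio with K. intros; apply Rmult_le_pos. apply Rmult_le_pos; auto; apply pow_le; lra. apply pow_le; lra.
  intros k Hk. specialize (HK k Hk). rewrite Rabs_pos_eq in HK by (apply pow_le; lra). simpl tri. rewrite pow_add. simpl pow.
  assert (0 <= r ^ tri k)%R by (apply pow_le; lra). assert (0 <= s ^ k)%R by (apply pow_le; lra).
  assert (0 <= r ^ k)%R by (apply pow_le; lra).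
  assert (r ^ k * s <= / 2)%R. { apply Rle_trans with (/ (2 * (s+1)) * (s + 1))%R. apply Rmult_le_compat; lra.
    right. field. lra. }
  set (Z := (A * r ^ tri k * s ^ k)%R). assert (0 <= Z)%R by (unfold Z; repeat apply Rmult_le_pos; auto).
  replace (A * (r ^ tri k * r ^ k) * (s * s ^ k))%R with (Z * (r ^ k * s))%R by (unfold Z; ring).
  apply Rle_trans with (Z * / 2)%R. apply Rmult_le_compat_l; auto. lra. Qed.

Lemma fsum_diff f a b : fsum f (a + b) - fsum f a = fsum (fun k => f (a + k)%nat) b.
Proof. rewrite fsum_split. ring. Qed.

Lemma abs_conv (f : nat -> C) (M : nat -> R) : (forall k, Cmod (f k) <= M k)%R -> summR M -> exists l, serC f l.
Proof. intros Hf [HM HT]. apply cauchyC. intros eps He. destruct (HT eps He) as [K HK]. exists K.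
  intros n m Hn Hm. destruct (Nat.le_ge_cases n m).
  - replace m with (n + (m - n))%nat by lia. rewrite Cmod_sub_sym, fsum_diff. eapply Rle_lt_trans. apply fsum_Cmod.
    eapply Rle_lt_trans. 2: apply (HK n (m - n)%nat Hn). apply fsumR_le. intros; apply Hf.
  - replace n with (m + (n - m))%nat by lia. rewrite fsum_diff. eapply Rle_lt_trans. apply fsum_Cmod.
    eapply Rle_lt_trans. 2: apply (HK m (n - m)%nat Hm). apply fsumR_le. intros; apply Hf. Qed.

Lemma lim_le_bound (u : nat -> C) l c (B : R) : limC u l -> (forall n, Cmod (u n - c) <= B)%R -> (Cmod (l - c) <= B)%R.
Proof. intros H Hb. apply Rnot_lt_le. intro Hlt. destruct (H (Cmod (l - c) - B)%R) as [N HN]. lra.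
  specialize (HN N (le_n N)). specialize (Hb N). assert (Cmod (l - c) <= Cmod (l - u N) + Cmod (u N - c))%R by apply Cmod_tri3.
  rewrite Cmod_sub_sym in HN. lra. Qed.

Lemma lim_ge_bound (u : nat -> C) l (B : R) : limC u l -> (forall n, B <= Cmod (u n))%R -> (B <= Cmod l)%R.
Proof. intros H Hb. apply Rnot_lt_le. intro Hlt. destruct (H (B - Cmod l)%R) as [N HN]. lra.
  specialize (HN N (le_n N)). specialize (Hb N). assert (Cmod (u N) <= Cmod (u N - l) + Cmod l)%R.
  { replace (u N) with ((u N - l) + l) at 1 by ring. apply Cmod_triangle. } lra. Qed.

Lemma lim_le_bound0 (u : nat -> C) l (B : R) : limC u l -> (forall n, Cmod (u n) <= B)%R -> (Cmod l <= B)%R.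
Proof. intros H Hb. replace l with (l - 0) by ring. apply lim_le_bound with u; auto. intros n. replace (u n - 0) with (u n) by ring. auto. Qed.

Lemma ser_tail (f : nat -> C) (M : nat -> R) l a eps : (forall k, Cmod (f k) <= M k)%R -> serC f l ->
  (forall b, fsumR (fun k => M (a + k)%nat) b <= eps)%R -> (Cmod (l - fsum f a) <= eps)%R.
Proof. intros Hf Hl Ht. set (u := fun n => fsum f (a + n)).
  assert (limC u l). { intros e He. destruct (Hl e He) as [N HN]. exists N. intros n Hn. apply HN. lia. }
  apply lim_le_bound with u; auto. intros n. unfold u. rewrite fsum_diff. eapply Rle_trans. apply fsum_Cmod.
  eapply Rle_trans. 2: apply (Ht n). apply fsumR_le. intros; apply Hf. Qed.

Lemma tannery (f : nat -> nat -> C) (g : nat -> C) (M : nat -> R) (h : nat -> nat) :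
  (forall k, limC (fun N => f N k) (g k)) -> (forall N k, Cmod (f N k) <= M k)%R -> summR M ->
  (forall N, (N <= h N)%nat) ->
  exists l, serC g l /\ limC (fun N => fsum (f N) (h N)) l.
Proof. intros Hlim Hb HM Hh.
  assert (Hg : forall k, (Cmod (g k) <= M k)%R). { intros k. apply lim_le_bound0 with (fun N => f N k); auto. }
  destruct (abs_conv g M Hg HM) as [l Hl]. exists l. split; auto.
  intros eps He. destruct HM as [HM0 HT]. destruct (HT (eps/4)%R) as [K HK]. lra.
  assert (HlK : (Cmod (l - fsum g K) <= eps/4)%R). { apply ser_tail with M; auto. intros b. left. apply HK. lia. }
  destruct (limC_fsum f g K (fun k _ => Hlim k) (eps/4)%R) as [N1 HN1]. lra.
  exists (max N1 K). intros N HN. specialize (HN1 N ltac:(lia)).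
  assert (HhN : (K <= h N)%nat) by (specialize (Hh N); lia).
  replace (fsum (f N) (h N)) with (fsum (f N) K + fsum (fun k => f N (K + k)%nat) (h N - K)%nat).
  2: { rewrite <- fsum_split. f_equal. lia. }
  assert (Cmod (fsum (fun k => f N (K + k)%nat) (h N - K)%nat) < eps/4)%R.
  { eapply Rle_lt_trans. apply fsum_Cmod. eapply Rle_lt_trans. 2: apply (HK K (h N - K)%nat); lia. apply fsumR_le. intros; apply Hb. }
  replace (fsum (f N) K + fsum (fun k : nat => f N (K + k)%nat) (h N - K) - l) with
    ((fsum (f N) K - fsum g K) + fsum (fun k : nat => f N (K + k)%nat) (h N - K) + (fsum g K - l)) by ring.
  eapply Rle_lt_trans. apply Cmod_triangle. rewrite Cmod_sub_sym in HlK.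
  assert (Cmod (fsum (f N) K - fsum g K + fsum (fun k : nat => f N (K + k)%nat) (h N - K)) <= Cmod (fsum (f N) K - fsum g K) + Cmod (fsum (fun k : nat => f N (K + k)%nat) (h N - K)))%R by apply Cmod_triangle.
  lra. Qed.


Lemma prodR_split f a b : prodR f (a + b) = (prodR f a * prodR (fun k => f (a + k)%nat) b)%R.
Proof. induction b; simpl. rewrite Nat.add_0_r. ring. rewrite Nat.add_succ_r. simpl. rewrite IHb. ring. Qed.

Lemma prodR_lower (t : nat -> R) n : (forall k, 0 <= t k <= 1)%R -> (1 - fsumR t n <= prodR (fun k => 1 - t k) n)%R.
Proof. intros H. induction n; simpl. lra.
  assert (0 <= fsumR t n)%R by (apply fsumR_nonneg; intros; apply H). specialize (H n).
  apply Rle_trans with ((1 - fsumR t n) * (1 - t n))%R. nra. apply Rmult_le_compat_r; lra. Qed.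

Lemma prodR_nonneg f n : (forall k, 0 <= f k)%R -> (0 <= prodR f n)%R.
Proof. intros H. induction n; simpl. lra. apply Rmult_le_pos; auto. Qed.
Lemma prodR_pos f n : (forall k, 0 < f k)%R -> (0 < prodR f n)%R.
Proof. intros H. induction n; simpl. lra. apply Rmult_lt_0_compat; auto. Qed.
Lemma prodR_dec f n m : (forall k, 0 <= f k <= 1)%R -> (n <= m)%nat -> (prodR f m <= prodR f n)%R.
Proof. intros H Hnm. induction Hnm. lra. simpl.
  assert (0 <= prodR f m)%R by (apply prodR_nonneg; intros; apply H). specialize (H m). nra. Qed.

Lemma prod_lower_bound (t : nat -> R) : (forall k, 0 <= t k < 1)%R -> summR t ->
  exists L, (0 < L)%R /\ forall n, (L <= prodR (fun k => 1 - t k) n)%R.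
Proof. intros Ht [H0 HT]. destruct (HT (1/2)%R) as [K HK]. lra.
  assert (HPK : (0 < prodR (fun k => 1 - t k) K)%R). { apply prodR_pos. intros k; specialize (Ht k); lra. }
  exists (prodR (fun k => 1 - t k) K / 2)%R. split. lra. intros n. destruct (Nat.le_ge_cases n K).
  - assert (prodR (fun k => 1 - t k) K <= prodR (fun k => 1 - t k) n)%R. apply prodR_dec; auto. intros k; specialize (Ht k); lra. lra.
  - replace n with (K + (n - K))%nat by lia. rewrite prodR_split.
    assert (1 - fsumR (fun k => t (K + k)%nat) (n - K) <= prodR (fun k => 1 - t (K + k)%nat) (n - K))%R.
    { apply prodR_lower. intros k; specialize (Ht (K+k)%nat); lra. }
    specialize (HK K (n - K)%nat (le_n K)).
    apply Rle_trans with (prodR (fun k : nat => 1 - t k) K * (1/2))%R. lra.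
    apply Rmult_le_compat_l; lra. Qed.

Lemma Cmod_1_plus_lower (x : C) : (1 - Cmod x <= Cmod (1 + x))%R.
Proof. assert (Cmod 1 <= Cmod (1 + x) + Cmod (- x))%R. { replace (RtoC 1) with ((1 + x) + - x) at 1 by ring. apply Cmod_triangle. }
  rewrite Cmod_opp, Cmod_1 in H. lra. Qed.
Lemma Cmod_1_plus_upper (x : C) : (Cmod (1 + x) <= 1 + Cmod x)%R.
Proof. eapply Rle_trans. apply Cmod_triangle. rewrite Cmod_1. lra. Qed.

Lemma prodC_lower (x : nat -> C) n : (forall k, Cmod (x k) <= 1)%R ->
  (prodR (fun k => 1 - Cmod (x k)) n <= Cmod (prodC (fun k => (1 + x k)%C) n))%R.
Proof. intros H. induction n; simpl. rewrite Cmod_1. lra. rewrite Cmod_mult.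
  apply Rmult_le_compat; auto. apply prodR_nonneg. intros k; specialize (H k); lra. specialize (H n); lra.
  apply Cmod_1_plus_lower. Qed.

Lemma prodC_upper (x : nat -> C) n : (forall k, Cmod (x k) <= 1)%R ->
  (Cmod (prodC (fun k => (1 + x k)%C) n) * prodR (fun k => 1 - Cmod (x k)) n <= 1)%R.
Proof. intros H. induction n; simpl. rewrite Cmod_1. lra. rewrite Cmod_mult.
  assert (0 <= prodR (fun k => 1 - Cmod (x k)) n)%R. { apply prodR_nonneg. intros k. specialize (H k). lra. }
  assert (0 <= Cmod (x n))%R by apply Cmod_ge_0. specialize (H n).
  assert (Cmod (1 + x n) * (1 - Cmod (x n)) <= 1)%R.
  { apply Rle_trans with ((1 + Cmod (x n)) * (1 - Cmod (x n)))%R. apply Rmult_le_compat_r. lra. apply Cmod_1_plus_upper. nra. }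
  assert (0 <= Cmod (prodC (fun k => (1 + x k)%C) n))%R by apply Cmod_ge_0.
  assert (0 <= Cmod (1 + x n))%R by apply Cmod_ge_0.
  replace (Cmod (prodC (fun k : nat => (1 + x k)%C) n) * Cmod (1 + x n) * (prodR (fun k : nat => 1 - Cmod (x k)) n * (1 - Cmod (x n))))%R
   with ((Cmod (prodC (fun k : nat => (1 + x k)%C) n) * prodR (fun k : nat => 1 - Cmod (x k)) n) * (Cmod (1 + x n) * (1 - Cmod (x n))))%R by ring.
  assert (0 <= Cmod (1 + x n) * (1 - Cmod (x n)))%R by (apply Rmult_le_pos; lra).
  assert (0 <= Cmod (prodC (fun k : nat => (1 + x k)%C) n) * prodR (fun k : nat => 1 - Cmod (x k)) n)%R by (apply Rmult_le_pos; lra).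
  nra. Qed.

Lemma prodC_conv (x : nat -> C) : (forall k, Cmod (x k) < 1)%R -> summR (fun k => Cmod (x k)) ->
  exists L l, (0 < L)%R /\ limC (prodC (fun k => (1 + x k)%C)) l /\
    (forall n, L <= Cmod (prodC (fun k => (1 + x k)%C) n))%R /\
    (forall n, Cmod (prodC (fun k => (1 + x k)%C) n) <= / L)%R /\ (L <= Cmod l)%R.
Proof. intros Hx Hs. destruct (prod_lower_bound (fun k => Cmod (x k))) as [L [HL HLn]]; auto.
  { intros k. split. apply Cmod_ge_0. auto. }
  assert (Hx1 : forall k, (Cmod (x k) <= 1)%R) by (intros k; left; auto).
  assert (Hlow : forall n, (L <= Cmod (prodC (fun k => (1 + x k)%C) n))%R).
  { intros n. eapply Rle_trans. apply HLn. apply prodC_lower; auto. }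
  assert (Hup : forall n, (Cmod (prodC (fun k => (1 + x k)%C) n) <= / L)%R).
  { intros n. specialize (prodC_upper x n Hx1). intros H. specialize (HLn n).
    assert (0 <= Cmod (prodC (fun k : nat => (1 + x k)%C) n))%R by apply Cmod_ge_0.
    apply Rmult_le_reg_r with L; auto. rewrite Rinv_l by lra.
    apply Rle_trans with (Cmod (prodC (fun k : nat => (1 + x k)%C) n) * prodR (fun k : nat => (1 - Cmod (x k))%R) n)%R; auto.
    apply Rmult_le_compat_l; auto. }
  set (P := prodC (fun k => (1 + x k)%C)).
  destruct (abs_conv (fun n => P (S n) - P n) (fun k => / L * Cmod (x k))%R) as [s Hs'].
  { intros k. unfold P. simpl prodC. replace (prodC (fun k0 : nat => 1 + x k0) k * (1 + x k) - prodC (fun k0 : nat => 1 + x k0) k)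
      with (prodC (fun k0 : nat => 1 + x k0) k * x k) by ring. rewrite Cmod_mult. apply Rmult_le_compat_r. apply Cmod_ge_0. apply Hup. }
  { apply summR_scal; auto. left; apply Rinv_0_lt_compat; auto. }
  exists L, (1 + s). split; auto.
  assert (Hl : limC P (1 + s)).
  { apply limC_ext with (fun n => 1 + fsum (fun n0 => P (S n0) - P n0) n). exists O. intros n _. rewrite fsum_tele. unfold P. simpl. ring.
    apply limC_plus. apply limC_const. auto. }
  split; auto. split; auto. split; auto. apply lim_ge_bound with P; auto. Qed.

Lemma qp_prodC a p n : qp a p n = prodC (fun k => 1 + (- (a * cp p k))) n.
Proof. induction n; simpl; auto. rewrite IHn. ring. Qed.

Lemma cp_le1 (p : C) k : (Cmod p < 1)%R -> (Cmod (cp p k) <= 1)%R.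
Proof. intros H. rewrite cp_Cmod. assert (0 <= Cmod p)%R by apply Cmod_ge_0. induction k; simpl. lra. nra. Qed.

Lemma qp_conv a p : (Cmod a < 1)%R -> (Cmod p < 1)%R ->
  exists L l, (0 < L)%R /\ limC (qp a p) l /\ (forall n, L <= Cmod (qp a p n))%R /\
    (forall n, Cmod (qp a p n) <= / L)%R /\ (L <= Cmod l)%R.
Proof. intros Ha Hp. destruct (prodC_conv (fun k => - (a * cp p k))) as [L [l [H1 [H2 [H3 [H4 H5]]]]]].
  { intros k. rewrite Cmod_opp, Cmod_mult. assert (Cmod (cp p k) <= 1)%R by (apply cp_le1; auto).
    assert (0 <= Cmod (cp p k))%R by apply Cmod_ge_0. assert (0 <= Cmod a)%R by apply Cmod_ge_0. nra. }
  { apply summR_le with (fun k => Cmod a * Cmod p ^ k)%R. intros; apply Cmod_ge_0.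
    intros k. rewrite Cmod_opp, Cmod_mult, cp_Cmod. lra. apply summR_scal. apply Cmod_ge_0. apply summR_geom. split; auto. apply Cmod_ge_0. }
  exists L, l. split; auto. split. intros e He. destruct (H2 e He) as [N HN]. exists N. intros n Hn. rewrite qp_prodC. auto.
  split. intros n. rewrite qp_prodC. auto. split; auto. intros n. rewrite qp_prodC. auto. Qed.


Fixpoint fall (p : C) (N k : nat) : C :=
  match k with O => 1 | S j => fall p N j * (1 - cp p (N - j)) end.
Definition qbin (p : C) (N k : nat) : C := fall p N k / qp p p k.

Lemma fall_zero p N k : (N < k)%nat -> fall p N k = 0.
Proof. induction k; intros H. lia. simpl. destruct (Nat.eq_dec k N). subst. rewrite Nat.sub_diag. simpl. ring.
  rewrite IHk by lia. ring. Qed.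

Lemma fall_S p N k : fall p (S N) (S k) = (1 - cp p (S N)) * fall p N k.
Proof. induction k. simpl. rewrite ?Nat.sub_0_r. ring. change (fall p (S N) (S (S k))) with (fall p (S N) (S k) * (1 - cp p (S N - S k))).
  rewrite IHk. simpl. ring. Qed.

Lemma qp_ne0 a p n : (forall k, (k < n)%nat -> 1 - a * cp p k <> 0) -> qp a p n <> 0.
Proof. induction n; intros H; simpl. intro E. apply (f_equal Cmod) in E. rewrite Cmod_1, Cmod_0 in E. lra.
  apply Cmult_neq_0. apply IHn. intros; apply H; lia. apply H; lia. Qed.

Lemma one_minus_ne0 (a : C) : (Cmod a < 1)%R -> 1 - a <> 0.
Proof. intros H E. assert (a = 1) by (replace a with (1 - (1 - a)) by ring; rewrite E; ring). subst. rewrite Cmod_1 in H. lra. Qed.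

Lemma Cmod_cp_lt (a p : C) k : (Cmod a < 1)%R -> (Cmod p < 1)%R -> (Cmod (a * cp p k) < 1)%R.
Proof. intros Ha Hp. rewrite Cmod_mult. assert (Cmod (cp p k) <= 1)%R by (apply cp_le1; auto).
  assert (0 <= Cmod (cp p k))%R by apply Cmod_ge_0. assert (0 <= Cmod a)%R by apply Cmod_ge_0. nra. Qed.

Lemma qp_nz a p n : (Cmod a < 1)%R -> (Cmod p < 1)%R -> qp a p n <> 0.
Proof. intros. apply qp_ne0. intros. apply one_minus_ne0. apply Cmod_cp_lt; auto. Qed.

Lemma qbin_pascal p N k : (Cmod p < 1)%R ->
  qbin p (S N) (S k) = qbin p N k + cp p (S k) * qbin p N (S k).
Proof. intros Hp. unfold qbin. rewrite fall_S. simpl fall. simpl qp.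
  assert (H1 : qp p p k <> 0) by (apply qp_nz; auto).
  assert (H2 : 1 - p * cp p k <> 0) by (apply one_minus_ne0; apply Cmod_cp_lt; auto).
  destruct (Nat.le_gt_cases k N).
  - replace (cp p (S N)) with (cp p (S k) * cp p (N - k)). simpl cp. field. split; auto.
    rewrite <- cp_add. f_equal. lia.
  - rewrite fall_zero by lia. field. split; auto. Qed.

Lemma qbin_0 p N : qbin p N 0 = 1.
Proof. unfold qbin. simpl. field; try (intro E; apply (f_equal Cmod) in E; rewrite Cmod_1, Cmod_0 in E; lra). Qed.
Lemma qbin_zero p N k : (N < k)%nat -> qbin p N k = 0.
Proof. intros. unfold qbin. rewrite fall_zero by auto. unfold Cdiv. ring. Qed.

Lemma qp_S_left a p n : qp a p (S n) = (1 - a) * qp (a * p) p n.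
Proof. induction n. simpl. ring. change (qp a p (S (S n))) with (qp a p (S n) * (1 - a * cp p (S n))).
  rewrite IHn. simpl. ring. Qed.

Lemma qp_add a p m n : qp a p (m + n) = qp a p m * qp (a * cp p m) p n.
Proof. induction n. rewrite Nat.add_0_r. simpl. ring. rewrite Nat.add_succ_r. simpl. rewrite IHn. rewrite cp_add. ring. Qed.

Lemma fall_qp p N k : (k <= N)%nat -> fall p N k * qp p p (N - k) = qp p p N.
Proof. induction k; intros H. simpl. rewrite Nat.sub_0_r. ring.
  simpl fall. rewrite <- IHk by lia. replace (N - k)%nat with (S (N - S k)) by lia. simpl qp.
  replace (p * cp p (N - S k)) with (cp p (S (N - S k))) by reflexivity. replace (S (N - S k)) with (N - k)%nat by lia. ring. Qed.

Lemma qbin_qp p N k : (Cmod p < 1)%R -> (k <= N)%nat -> qbin p N k = qp p p N / (qp p p k * qp p p (N - k)).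
Proof. intros Hp H. unfold qbin. rewrite <- (fall_qp p N k H). field. split; apply qp_nz; auto. Qed.

Lemma qbinom_thm p x N : (Cmod p < 1)%R ->
  qp (- x) p N = fsum (fun k => qbin p N k * cp p (tri k) * cp x k) (S N).
Proof. intros Hp. revert x. induction N; intros x.
  - simpl. rewrite qbin_0. simpl. ring.
  - rewrite qp_S_left. replace (- x * p) with (- (p * x)) by ring. rewrite (IHN (p * x)).
    set (A := fun k => qbin p N k * cp p (tri k) * cp (p * x) k).
    rewrite (fsum_shift1 (fun k => qbin p (S N) k * cp p (tri k) * cp x k) (S N)).
    cbv beta.
    rewrite (fsum_ext (fun k => qbin p (S N) (S k) * cp p (tri (S k)) * cp x (S k)) (fun k => x * A k + A (S k))).
    2: { intros k Hk. unfold A. rewrite qbin_pascal by auto. simpl tri. rewrite !cp_add, !cp_mult. simpl cp. ring. }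
    rewrite fsum_plus, fsum_scal.
    assert (E : fsum (fun k => A (S k)) (S N) = fsum A (S N) + A (S N) - A O).
    { pose proof (fsum_shift1 A (S N)) as H. change (fsum A (S (S N))) with (fsum A (S N) + A (S N)) in H.
      replace (fsum (fun k => A (S k)) (S N)) with ((A O + fsum (fun k => A (S k)) (S N)) - A O) by ring.
      rewrite <- H. ring. }
    rewrite E. assert (A (S N) = 0). { unfold A. rewrite qbin_zero by lia. ring. }
    assert (A O = 1). { unfold A. rewrite qbin_0. simpl. ring. }
    rewrite H, H0, qbin_0. simpl. ring. Qed.

Lemma pow_le_one (x : R) n : (0 <= x <= 1)%R -> (x ^ n <= 1)%R.
Proof. intros H. induction n; simpl. lra. assert (0 <= x ^ n)%R by (apply pow_le; lra). nra. Qed.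

Lemma qbin_bound_aux p N k : (Cmod p < 1)%R ->
  (Cmod (qbin p N k) * prodR (fun i => 1 - Cmod p ^ (S i)) k <= 1)%R.
Proof. intros Hp. assert (Hr : (0 <= Cmod p)%R) by apply Cmod_ge_0.
  assert (Hf : forall i, (0 <= 1 - Cmod p ^ (S i) <= 1)%R).
  { intros i. split. assert (Cmod p ^ S i <= 1)%R. apply pow_le_one. lra. lra. assert (0 <= Cmod p ^ S i)%R by (apply pow_le; lra). lra. }
  revert k. induction N; intros k.
  - destruct k. rewrite qbin_0, Cmod_1. simpl. lra. rewrite qbin_zero by lia. rewrite Cmod_0. lra.
  - destruct k as [|j]. rewrite qbin_0, Cmod_1. simpl. lra.
    rewrite qbin_pascal by auto. change (prodR (fun i : nat => (1 - Cmod p ^ S i)%R) (S j)) with (prodR (fun i : nat => (1 - Cmod p ^ S i)%R) j * (1 - Cmod p ^ S j))%R.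
    assert (H1 := IHN j). assert (H2 := IHN (S j)).
    change (prodR (fun i : nat => (1 - Cmod p ^ S i)%R) (S j)) with (prodR (fun i : nat => (1 - Cmod p ^ S i)%R) j * (1 - Cmod p ^ S j))%R in H2.
    set (Pj := prodR (fun i : nat => (1 - Cmod p ^ S i)%R) j) in *.
    assert (0 <= Pj)%R by (apply prodR_nonneg; intros; apply Hf).
    assert (H3 := Hf j).
    assert (Cmod (qbin p N j + cp p (S j) * qbin p N (S j)) <= Cmod (qbin p N j) + Cmod p ^ S j * Cmod (qbin p N (S j)))%R.
    { eapply Rle_trans. apply Cmod_triangle. rewrite Cmod_mult, cp_Cmod. lra. }
    assert (0 <= Cmod p ^ S j)%R by (apply pow_le; lra).
    assert (0 <= Cmod (qbin p N j))%R by apply Cmod_ge_0. assert (0 <= Cmod (qbin p N (S j)))%R by apply Cmod_ge_0.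
    apply Rle_trans with ((Cmod (qbin p N j) + Cmod p ^ S j * Cmod (qbin p N (S j))) * (Pj * (1 - Cmod p ^ S j)))%R.
    apply Rmult_le_compat_r. apply Rmult_le_pos; lra. auto.
    set (s := (Cmod p ^ S j)%R) in *. set (a := Cmod (qbin p N j)) in *. set (b := Cmod (qbin p N (S j))) in *.
    assert (a * Pj * (1 - s) <= 1 * (1 - s))%R by (apply Rmult_le_compat_r; lra).
    assert (s * (b * (Pj * (1 - s))) <= s * 1)%R by (apply Rmult_le_compat_l; lra).
    replace ((a + s * b) * (Pj * (1 - s)))%R with (a * Pj * (1 - s) + s * (b * (Pj * (1 - s))))%R by ring. lra. Qed.

Lemma qbin_bound p : (Cmod p < 1)%R -> exists B, (0 < B)%R /\ forall N k, (Cmod (qbin p N k) <= B)%R.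
Proof. intros Hp. assert (Hr : (0 <= Cmod p)%R) by apply Cmod_ge_0.
  destruct (prod_lower_bound (fun i => Cmod p ^ (S i))%R) as [L [HL HLn]].
  { intros i. split. apply pow_le; lra. apply pow_lt_1_compat; [lra|lia]. }
  { apply summR_le with (fun i => Cmod p * Cmod p ^ i)%R. intros; apply pow_le; lra. intros; simpl; lra.
    apply summR_scal; auto. apply summR_geom; lra. }
  exists (/ L)%R. split. apply Rinv_0_lt_compat; auto. intros N k.
  assert (H := qbin_bound_aux p N k Hp). specialize (HLn k).
  assert (0 <= Cmod (qbin p N k))%R by apply Cmod_ge_0.
  apply Rmult_le_reg_r with L; auto. rewrite Rinv_l by lra.
  apply Rle_trans with (Cmod (qbin p N k) * prodR (fun i : nat => (1 - Cmod p ^ S i)%R) k)%R; auto.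
  apply Rmult_le_compat_l; auto. Qed.

Lemma cp_lim0_shift p k : (Cmod p < 1)%R -> limC (fun N => cp p (N - k)) 0.
Proof. intros Hp eps He. assert (Hr : (0 <= Cmod p)%R) by apply Cmod_ge_0.
  destruct (pow_lt_1_zero (Cmod p) ltac:(rewrite Rabs_pos_eq; lra) eps He) as [N0 HN0].
  exists (N0 + k)%nat. intros n Hn. replace (cp p (n - k) - 0) with (cp p (n - k)) by ring. rewrite cp_Cmod.
  specialize (HN0 (n - k)%nat ltac:(lia)). rewrite Rabs_pos_eq in HN0 by (apply pow_le; lra). auto. Qed.

Lemma fall_lim p k : (Cmod p < 1)%R -> limC (fun N => fall p N k) 1.
Proof. intros Hp. induction k. simpl. apply limC_const.
  simpl. assert (H := limC_mult _ _ _ _ IHk (limC_minus _ _ _ _ (limC_const 1) (cp_lim0_shift p k Hp))).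
  replace (1 * (1 - 0)) with (RtoC 1) in H by ring. exact H. Qed.

Lemma qbin_lim p k : (Cmod p < 1)%R -> limC (fun N => qbin p N k) (/ qp p p k).
Proof. intros Hp. unfold qbin. replace (/ qp p p k) with (/ qp p p k * 1) by ring.
  apply limC_ext with (fun N => / qp p p k * fall p N k). exists O. intros. unfold Cdiv. ring.
  apply limC_scal. apply fall_lim; auto. Qed.

Lemma cp_sq_S (x : C) j : cp x (S j * S j) = cp x (j * j) * cp x j * cp x j * x.
Proof. replace (S j * S j)%nat with (j * j + j + j + 1)%nat by lia. rewrite !cp_add. simpl. ring. Qed.

Lemma G_id p c M : (Cmod p < 1)%R ->
  fsum (fun m => cp p (m * m) * cp c m * qbin p M m * qp (c * cp p (S m)) p (M - m)) (S M) = 1.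
Proof. intros Hp. revert c. induction M; intros c.
  - simpl. rewrite qbin_0. simpl. ring.
  - rewrite <- (IHM (c * p)).
    set (T := fun m => cp p (m * m) * cp (c * p) m * qbin p M m * qp (c * p * cp p (S m)) p (M - m)).
    set (F := fun m => cp p (m * m) * cp c m * cp p m * qbin p M m * qp (c * cp p (S m)) p (S M - m)).
    set (V := fun j => cp p (S j * S j) * cp c (S j) * qbin p M j * qp (c * p * cp p (S j)) p (M - j)).
    rewrite fsum_shift1.
    rewrite (fsum_ext (fun k => cp p (S k * S k) * cp c (S k) * qbin p (S M) (S k) * qp (c * cp p (S (S k))) p (S M - S k))
               (fun k => V k + F (S k))).
    2: { intros k Hk. unfold V, F. rewrite qbin_pascal by auto. replace (c * cp p (S (S k))) with (c * p * cp p (S k)) by (simpl; ring).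
         replace (S M - S k)%nat with (M - k)%nat by lia. ring. }
    rewrite fsum_plus.
    assert (E1 : fsum (fun k => F (S k)) (S M) = fsum F (S M) + F (S M) - F O).
    { pose proof (fsum_shift1 F (S M)) as H. change (fsum F (S (S M))) with (fsum F (S M) + F (S M)) in H.
      replace (fsum (fun k => F (S k)) (S M)) with ((F O + fsum (fun k => F (S k)) (S M)) - F O) by ring.
      rewrite <- H. ring. }
    rewrite E1.
    assert (E2 : F (S M) = 0). { unfold F. rewrite qbin_zero by lia. ring. }
    assert (E3 : fsum F (S M) = fsum (fun m => T m - V m) (S M)).
    { apply fsum_ext. intros m Hm. unfold F, T, V. replace (S M - m)%nat with (S (M - m)) by lia.
      rewrite qp_S_left. replace (c * cp p (S m) * p) with (c * p * cp p (S m)) by ring.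
      rewrite cp_sq_S, cp_mult. simpl cp. ring. }
    rewrite E2, E3.
    rewrite (fsum_ext (fun m => T m - V m) (fun m => T m + (-1) * V m)) by (intros; ring).
    rewrite fsum_plus, fsum_scal.
    replace (qbin p (S M) 0) with (qbin p M 0) by (rewrite !qbin_0; auto).
    unfold F. simpl. 
    rewrite !qbin_0. ring. Qed.


Lemma tele_rec (c : nat -> C) (K : nat -> nat -> C) (G : nat -> C) (m : C) n :
  (forall r, (r <= n)%nat -> c r * K (S n) r - m * (c r * K n r) = G (S r) - G r) ->
  c (S n) * K (S n) (S n) = G (S (S n)) - G (S n) -> G O = 0 -> G (S (S n)) = 0 ->
  fsum (fun r => c r * K (S n) r) (S (S n)) = m * fsum (fun r => c r * K n r) (S n).
Proof. intros H H1 H0 H2. change (fsum (fun r => c r * K (S n) r) (S (S n))) with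
   (fsum (fun r => c r * K (S n) r) (S n) + c (S n) * K (S n) (S n)).
  rewrite (fsum_ext (fun r => c r * K (S n) r) (fun r => m * (c r * K n r) + (G (S r) - G r))).
  2: { intros r Hr. rewrite <- H by lia. ring. }
  rewrite fsum_plus, fsum_scal, fsum_tele, H1, H0, H2. ring. Qed.

Lemma rec_eq (U T m : nat -> C) : U O = T O -> (forall n, U (S n) = m n * U n) -> (forall n, T (S n) = m n * T n) ->
  forall n, U n = T n.
Proof. intros H0 HS HT n. induction n; auto. rewrite HS, HT, IHn. auto. Qed.

Lemma cp_0 (x : C) : cp x O = 1.
Proof. reflexivity. Qed.
Lemma qp_S a p n : qp a p (S n) = qp a p n * (1 - a * cp p n).
Proof. reflexivity. Qed.

Ltac normcp := repeat (rewrite ?cp_S, ?cp_add, ?cp_mult, ?cp_0 in *).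

Definition KJ (P : C) (n r : nat) : C := / (qp P P (n - r) * qp P P (n + r)).
Definition cJ (z w : C) (r : nat) : C :=
  match r with O => 1 | S _ => cp (-1) r * cp (z*w) (tri r) * (cp z r + cp w r) end.
Definition mJ (z w : C) (n : nat) : C :=
  (1 - z * cp (z*w) n) * (1 - w * cp (z*w) n) /
  ((1 - (z*w) * cp (z*w) (n+n)) * (1 - (z*w)*(z*w) * cp (z*w) (n+n))).
Definition GJ (z w : C) (n r : nat) : C :=
  match r with O => 0 | S _ =>
  if Nat.leb r (S n) then
   cp (-1) r * cp (z*w) (tri r) / (qp (z*w) (z*w) (n + r) * qp (z*w) (z*w) (S n - r)) *
   (- cp (z*w) (S n - r) * cp z r * (1 - w * cp (z*w) n) - cp (z*w) (S n - r) * cp w r * (1 - z * cp (z*w) n)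
    - w * cp (z*w) n * cp z r * (1 - z * cp (z*w) n) - z * cp (z*w) n * cp w r * (1 - w * cp (z*w) n))
   / ((1 - (z*w) * cp (z*w) (n+n)) * (1 - (z*w)*(z*w) * cp (z*w) (n+n)))
  else 0 end.

Lemma JT_generic z w r s : (Cmod z < 1)%R -> (Cmod w < 1)%R ->
  let n := (S r + s)%nat in
  cJ z w (S r) * KJ (z*w) (S n) (S r) - mJ z w n * (cJ z w (S r) * KJ (z*w) n (S r)) = GJ z w n (S (S r)) - GJ z w n (S r).
Proof. intros Hz Hw n. unfold n. unfold GJ.
  replace (Nat.leb (S (S r)) (S (S r + s))) with true by (symmetry; apply Nat.leb_le; lia).
  replace (Nat.leb (S r) (S (S r + s))) with true by (symmetry; apply Nat.leb_le; lia).
  unfold cJ, KJ, mJ.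
  assert (HP : (Cmod (z * w) < 1)%R). { rewrite Cmod_mult. assert (0 <= Cmod z)%R by apply Cmod_ge_0. assert (0 <= Cmod w)%R by apply Cmod_ge_0. nra. }
  replace (S (S r + s) - S r)%nat with (S s) by lia.
  replace (S (S r + s) + S r)%nat with (S (S (S (r + r + s)))) by lia.
  replace (S r + s - S r)%nat with s by lia.
  replace (S r + s + S r)%nat with (S (S (r + r + s))) by lia.
  replace (S r + s + S (S r))%nat with (S (S (S (r + r + s)))) by lia.
  replace (S (S r + s) - S (S r))%nat with s by lia.
  replace (S r + s + (S r + s))%nat with (S (S (r + r + s + s))) by lia.
  simpl tri. rewrite !qp_S.
  assert (H1 : qp (z*w) (z*w) s <> 0) by (apply qp_nz; auto).
  assert (H2 : qp (z*w) (z*w) (r + r + s) <> 0) by (apply qp_nz; auto).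
  assert (H3 : forall k, 1 - z * w * cp (z*w) k <> 0) by (intros; apply one_minus_ne0; apply Cmod_cp_lt; auto).
  assert (H4 : forall k, 1 - z * w * (z * w) * cp (z*w) k <> 0).
  { intros k. replace (z * w * (z * w) * cp (z * w) k) with (z * w * cp (z*w) (S k)) by (simpl; ring). auto. }
  assert (H5 := H3 s). assert (H6 := H3 (r + r + s)%nat). assert (H7 := H3 (S (r + r + s))). assert (H8 := H3 (S (S (r + r + s)))).
  assert (H9 := H3 (S (S (r + r + s + s)))). assert (H10 := H4 (S (S (r + r + s + s)))). clear H3 H4.
  normcp. field; repeat split; cbv beta; auto. Qed.

Lemma CmodP_lt z w : (Cmod z < 1)%R -> (Cmod w < 1)%R -> (Cmod (z * w) < 1)%R.
Proof. intros. rewrite Cmod_mult. assert (0 <= Cmod z)%R by apply Cmod_ge_0. assert (0 <= Cmod w)%R by apply Cmod_ge_0. nra. Qed.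

Lemma om_nz P k : (Cmod P < 1)%R -> 1 - P * cp P k <> 0.
Proof. intros. apply one_minus_ne0. apply Cmod_cp_lt; auto. Qed.
Lemma om2_nz P k : (Cmod P < 1)%R -> 1 - P * P * cp P k <> 0.
Proof. intros. replace (P * P * cp P k) with (P * cp P (S k)) by (simpl; ring). apply om_nz; auto. Qed.

Lemma JT_zero z w n : (Cmod z < 1)%R -> (Cmod w < 1)%R ->
  cJ z w 0 * KJ (z*w) (S n) 0 - mJ z w n * (cJ z w 0 * KJ (z*w) n 0) = GJ z w n 1 - GJ z w n 0.
Proof. intros Hz Hw. assert (HP := CmodP_lt z w Hz Hw). unfold GJ.
  replace (Nat.leb 1 (S n)) with true by (symmetry; apply Nat.leb_le; lia).
  unfold cJ, KJ, mJ. rewrite !Nat.sub_0_r, !Nat.add_0_r. replace (S n - 1)%nat with n by lia. rewrite Nat.add_1_r.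
  simpl tri. rewrite !qp_S.
  assert (H1 : qp (z*w) (z*w) n <> 0) by (apply qp_nz; auto).
  assert (H2 := om_nz (z*w) n HP). assert (H3 := om_nz (z*w) (n+n) HP). assert (H4 := om2_nz (z*w) (n+n) HP).
  normcp. field; repeat split; cbv beta; auto. Qed.

Lemma JT_last z w n : (Cmod z < 1)%R -> (Cmod w < 1)%R ->
  cJ z w (S n) * KJ (z*w) (S n) (S n) = GJ z w n (S (S n)) - GJ z w n (S n).
Proof. intros Hz Hw. assert (HP := CmodP_lt z w Hz Hw). unfold GJ.
  replace (Nat.leb (S (S n)) (S n)) with false by (symmetry; apply Nat.leb_gt; lia).
  replace (Nat.leb (S n) (S n)) with true by (symmetry; apply Nat.leb_le; lia).
  unfold cJ, KJ, mJ. rewrite !Nat.sub_diag. replace (S n + S n)%nat with (S (S (n + n))) by lia.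
  replace (n + S n)%nat with (S (n + n)) by lia.
  simpl tri. rewrite !qp_S.
  assert (H1 : qp (z*w) (z*w) (n + n) <> 0) by (apply qp_nz; auto).
  assert (H2 := om_nz (z*w) (n+n) HP). assert (H3 := om_nz (z*w) (S (n+n)) HP). assert (H4 := om2_nz (z*w) (n+n) HP).
  simpl qp. normcp. field; repeat split; cbv beta; auto. Qed.

Definition TJ (z w : C) (n : nat) : C := qp z (z*w) n * qp w (z*w) n / qp (z*w) (z*w) (n+n).

Lemma JT_finite z w n : (Cmod z < 1)%R -> (Cmod w < 1)%R ->
  fsum (fun r => cJ z w r * KJ (z*w) n r) (S n) = TJ z w n.
Proof. intros Hz Hw. assert (HP := CmodP_lt z w Hz Hw). revert n.
  apply (rec_eq (fun n => fsum (fun r => cJ z w r * KJ (z*w) n r) (S n)) (TJ z w) (mJ z w)).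
  { simpl. unfold KJ, TJ. simpl. field. }
  { intros m. cbv beta. apply (tele_rec (cJ z w) (KJ (z*w)) (GJ z w m) (mJ z w m) m).
    { intros r Hr. destruct r. apply JT_zero; auto. destruct (Nat.le_exists_sub (S r) m Hr) as [s [Hs _]].
      subst m. replace (s + S r)%nat with (S r + s)%nat by lia. apply JT_generic; auto. }
    { apply JT_last; auto. }
    { reflexivity. }
    { unfold GJ. replace (Nat.leb (S (S m)) (S m)) with false by (symmetry; apply Nat.leb_gt; lia). auto. } }
  { intros m. unfold TJ, mJ. replace (S m + S m)%nat with (S (S (m + m))) by lia. rewrite !qp_S.
    assert (H1 : qp (z*w) (z*w) (m + m) <> 0) by (apply qp_nz; auto).
    assert (H2 := om_nz (z*w) (m+m) HP). assert (H3 := om_nz (z*w) (S (m+m)) HP). assert (H4 := om2_nz (z*w) (m+m) HP).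
    rewrite cp_S. simpl cp in H3. field; repeat split; cbv beta; auto. }
Qed.


Lemma limC_subk u l k : limC u l -> limC (fun n => u (n - k)%nat) l.
Proof. intros H eps He. destruct (H eps He) as [N HN]. exists (N + k)%nat. intros n Hn. apply HN. lia. Qed.

Lemma serC_scal c f l : serC f l -> serC (fun k => c * f k) (c * l).
Proof. intros H. unfold serC. apply limC_ext with (fun n => c * fsum f n). exists O. intros. rewrite fsum_scal. auto.
  apply limC_scal. auto. Qed.
Lemma serC_ext f g l : (forall k, f k = g k) -> serC f l -> serC g l.
Proof. intros E H. unfold serC. apply limC_ext with (fsum f). exists O. intros. apply fsum_ext. intros; auto. auto. Qed.
Lemma serC_plus f g a b : serC f a -> serC g b -> serC (fun k => f k + g k) (a + b).
Proof. intros Ha Hb. unfold serC. apply limC_ext with (fun n => fsum f n + fsum g n). exists O. intros. rewrite fsum_plus. auto.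
  apply limC_plus; auto. Qed.
Lemma serC_unique f a b : serC f a -> serC f b -> a = b.
Proof. apply limC_unique. Qed.
Lemma serC_shift f l : serC f l -> serC (fun k => f (S k)) (l - f O).
Proof. intros H. unfold serC. apply limC_ext with (fun n => fsum f (S n) - f O). exists O. intros n _. rewrite fsum_shift1. ring.
  apply limC_minus. apply limC_sub; auto. apply limC_const. Qed.

Lemma Cmod_m1_pow r : Cmod (cp (-1) r) = 1%R.
Proof. rewrite cp_Cmod. replace (Cmod (-1)) with 1%R. apply pow1.
  rewrite Cmod_R. rewrite Rabs_left by lra. lra. Qed.

Lemma JT_inf z w : (Cmod z < 1)%R -> (Cmod w < 1)%R ->
  exists Lz Lw LP S, limC (qp z (z*w)) Lz /\ limC (qp w (z*w)) Lw /\ limC (qp (z*w) (z*w)) LP /\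
    serC (cJ z w) S /\ S = Lz * Lw * LP.
Proof. intros Hz Hw. assert (HP := CmodP_lt z w Hz Hw). set (P := z * w) in *.
  destruct (qp_conv z P Hz HP) as [L1 [Lz [_ [Hz1 _]]]].
  destruct (qp_conv w P Hw HP) as [L2 [Lw [_ [Hw1 _]]]].
  destruct (qp_conv P P HP HP) as [L [LP [HL [HP1 [HPlow [_ HLP]]]]]].
  assert (HLP0 : LP <> 0). { intro E. rewrite E, Cmod_0 in HLP. lra. }
  set (g := fun r => cJ z w r * / (LP * LP)).
  destruct (tannery (fun N r => cJ z w r * KJ P N r) g (fun r => 2 / (L * L) * Cmod P ^ tri r * 1 ^ r)%R (fun N => S N)) as [l [Hl1 Hl2]].
  { intros r. unfold g. apply limC_scal. unfold KJ. apply limC_inv. apply limC_mult. apply limC_subk; auto. apply limC_sub; auto. intros; lia.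
    apply Cmult_neq_0; auto. }
  { intros N r. unfold KJ. rewrite Cmod_mult, Cmod_inv. 2: { apply Cmult_neq_0; apply qp_nz; auto. }
    rewrite Cmod_mult. rewrite pow1, Rmult_1_r.
    assert (Hc : (Cmod (cJ z w r) <= 2 * Cmod P ^ tri r)%R).
    { destruct r. simpl. rewrite Cmod_1. lra. unfold cJ. fold P. rewrite !Cmod_mult, Cmod_m1_pow, cp_Cmod.
      assert (Cmod (cp z (S r) + cp w (S r)) <= 2)%R. { eapply Rle_trans. apply Cmod_triangle. assert (H1 := cp_le1 z (S r) Hz). assert (H2 := cp_le1 w (S r) Hw). lra. }
      assert (0 <= Cmod P ^ tri (S r))%R by (apply pow_le; apply Cmod_ge_0). nra. }
    assert (H1 := HPlow (N - r)%nat). assert (H2 := HPlow (N + r)%nat).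
    assert (0 < Cmod (qp P P (N - r)) * Cmod (qp P P (N + r)))%R by (apply Rmult_lt_0_compat; lra).
    assert (L * L <= Cmod (qp P P (N - r)) * Cmod (qp P P (N + r)))%R by (apply Rmult_le_compat; lra).
    assert (/ (Cmod (qp P P (N - r)) * Cmod (qp P P (N + r))) <= / (L * L))%R by (apply Rinv_le_contravar; auto; nra).
    assert (0 <= Cmod (cJ z w r))%R by apply Cmod_ge_0.
    assert (0 <= / (Cmod (qp P P (N - r)) * Cmod (qp P P (N + r))))%R by (left; apply Rinv_0_lt_compat; auto).
    unfold Rdiv. replace (2 * / (L * L) * Cmod P ^ tri r)%R with (2 * Cmod P ^ tri r * / (L * L))%R by ring.
    apply Rmult_le_compat; auto. }
  { apply summR_quad. apply Rlt_le. apply Rdiv_lt_0_compat. lra. apply Rmult_lt_0_compat; auto. split. apply Cmod_ge_0. auto. lra. }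
  { intros; lia. }
  assert (Hlim : limC (fun N => TJ z w N) (Lz * Lw / LP)).
  { unfold TJ. fold P. apply limC_mult. apply limC_mult; auto. apply limC_inv; auto. apply (limC_sub (qp P P) LP (fun n => n + n)%nat); auto. intros; lia. }
  assert (Hl : l = Lz * Lw / LP).
  { apply (limC_unique (fun N => TJ z w N)); auto. apply limC_ext with (fun N => fsum (fun r => cJ z w r * KJ P N r) (S N)); auto.
    exists O. intros N _. apply JT_finite; auto. }
  exists Lz, Lw, LP, (l * (LP * LP)). split; auto. split; auto. split; auto. split.
  { apply serC_ext with (fun r => (LP * LP) * g r). intros r. unfold g. field. auto.
    replace (l * (LP * LP)) with ((LP * LP) * l) by ring. apply serC_scal. auto. }
  rewrite Hl. field. auto. Qed.


Definition KB (p ap : C) (n r : nat) : C := / (qp p p (n - r) * qp ap p (n + r)).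
Definition aA (q : C) (r : nat) : C :=
  match r with O => 1 | S _ => cp (-1) r * cp q (r*r + tri r) * (1 + cp q r) end.
Definition aB (q : C) (r : nat) : C := cp (-1) r * cp q (r*r + tri r) * (1 - cp q (S (S (r+r+r+r)))) / (1 - q*q).
Definition aC (q : C) (r : nat) : C := cp (-1) r * cp q (r*r + tri r + r) * (1 - cp q (S (r+r))) / (1 - q).
Definition bA (q : C) (n : nat) : C := / (qp (q*q) (q*q) n * qp (-q) q (n+n)).
Definition bC (q : C) (n : nat) : C := / (qp (q*q) (q*q) n * qp (-(q*q)) q (n+n)).
Definition mA (q : C) (n : nat) : C := / ((1 - q*q*cp (q*q) n) * (1 + q*cp (q*q) n) * (1 + q*q*cp (q*q) n)).
Definition mC (q : C) (n : nat) : C := / ((1 - q*q*cp (q*q) n) * (1 + q*q*cp (q*q) n) * (1 + q*q*q*cp (q*q) n)).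

Definition GA (q : C) (n r : nat) : C :=
  match r with O => 0 | S _ => if Nat.leb r (S n) then
    cp (-1) r * cp q (r*r + tri r) / (qp (q*q) (q*q) (S n - r) * qp (q*q) (q*q) (n + r)) * mA q n *
    (- cp q (2 * (S n - r)) - cp q (S (S (n+n)) - r) * (1 + q * cp (q*q) n) - q * cp (q*q) n)
  else 0 end.
Definition GB (q : C) (n r : nat) : C :=
  match r with O => 0 | S _ => if Nat.leb r (S n) then
    cp (-1) r * cp q (r*r + tri r) / (1 - q*q) / (qp (q*q) (q*q) (S n - r) * qp (q*q*(q*q)) (q*q) (n + r)) * mA q n *
    (- cp q (2 * (S n - r)) - cp q (S (S (S (n+n+n+n))) - r)
     + (q*q*q*q * cp (q*q) n * cp (q*q) n - q * cp (q*q) n)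
     + (q * cp (q*q) n - q*q*q*q * cp (q*q) n * cp (q*q) n) * cp q r
     + q*q*q * cp (q*q) n * cp (q*q) n * cp q r * cp q r
     + q*q * cp (q*q) n * cp q r * cp q r * cp q r)
  else 0 end.
Definition GC (q : C) (n r : nat) : C :=
  match r with O => 0 | S _ => if Nat.leb r (S n) then
    cp (-1) r * cp q (r*r + tri r + r) / (1 - q) / (qp (q*q) (q*q) (S n - r) * qp (q*q*(q*q)) (q*q) (n + r)) * mC q n *
    (- cp q (2 * (S n - r)) - cp q (S (S (S (S (n+n+n+n)))) - r)
     + q*q*q*q * cp (q*q) n * cp (q*q) n + q*q * cp (q*q) n * cp q r)
  else 0 end.

Lemma op_nz (x : C) : (Cmod x < 1)%R -> 1 + x <> 0.
Proof. intros H. replace (1 + x) with (1 - (- x)) by ring. apply one_minus_ne0. rewrite Cmod_opp. auto. Qed.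

Lemma A_generic q r s : (Cmod q < 1)%R ->
  let n := (S r + s)%nat in
  aA q (S r) * KB (q*q) (q*q) (S n) (S r) - mA q n * (aA q (S r) * KB (q*q) (q*q) n (S r)) = GA q n (S (S r)) - GA q n (S r).
Proof. intros Hq n. unfold n. unfold GA.
  replace (Nat.leb (S (S r)) (S (S r + s))) with true by (symmetry; apply Nat.leb_le; lia).
  replace (Nat.leb (S r) (S (S r + s))) with true by (symmetry; apply Nat.leb_le; lia).
  unfold aA, KB, mA.
  replace (S (S r + s) - S r)%nat with (S s) by lia.
  replace (S (S r + s) + S r)%nat with (S (S (S (r + r + s)))) by lia.
  replace (S r + s - S r)%nat with s by lia.
  replace (S r + s + S r)%nat with (S (S (r + r + s))) by lia.
  replace (S (S r + s) - S (S r))%nat with s by lia.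
  replace (S r + s + S (S r))%nat with (S (S (S (r + r + s)))) by lia.
  replace (2 * (s))%nat with (s + s)%nat by lia.
  replace (2 * (S s))%nat with (S (S (s + s))) by lia.
  replace (S (S (S r + s + (S r + s))) - S (S r))%nat with (S (S (r + s + s))) by lia.
  replace (S (S (S r + s + (S r + s))) - S r)%nat with (S (S (S (r + s + s)))) by lia.
  simpl tri. rewrite !qp_S.
  assert (Hp : (Cmod (q*q) < 1)%R) by (apply CmodP_lt; auto).
  assert (H1 : qp (q*q) (q*q) s <> 0) by (apply qp_nz; auto).
  assert (H2 : qp (q*q) (q*q) (r + r + s) <> 0) by (apply qp_nz; auto).
  assert (H5 := om_nz (q*q) s Hp). assert (H6 := om_nz (q*q) (r + r + s) Hp).
  assert (H7 := om_nz (q*q) (S (r + r + s)) Hp). assert (H8 := om_nz (q*q) (S (S (r + r + s))) Hp).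
  assert (H9 := om_nz (q*q) (S r + s) Hp).
  assert (H10 := op_nz (q * cp (q*q) (S r + s)) ltac:(apply Cmod_cp_lt; auto)).
  assert (H11 := op_nz (q * q * cp (q*q) (S r + s)) ltac:(apply Cmod_cp_lt; auto; apply CmodP_lt; auto)).
  repeat rewrite cp_sq_S. simpl tri.
  normcp. repeat rewrite cp_sq_S. normcp. field; repeat split; cbv beta; auto. Qed.

Ltac nzfacts q :=
  let Hp := fresh "Hp" in
  assert (Hp : (Cmod (q*q) < 1)%R) by (apply CmodP_lt; auto).

Lemma A_zero q n : (Cmod q < 1)%R ->
  aA q 0 * KB (q*q) (q*q) (S n) 0 - mA q n * (aA q 0 * KB (q*q) (q*q) n 0) = GA q n 1 - GA q n 0.
Proof. intros Hq. unfold GA.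
  replace (Nat.leb 1 (S n)) with true by (symmetry; apply Nat.leb_le; lia).
  unfold aA, KB, mA. rewrite !Nat.sub_0_r, !Nat.add_0_r.
  replace (S n - 1)%nat with n by lia. replace (n + 1)%nat with (S n) by lia.
  replace (2 * n)%nat with (n + n)%nat by lia. replace (S (S (n + n)) - 1)%nat with (S (n + n)) by lia.
  simpl tri. rewrite !qp_S.
  assert (Hp : (Cmod (q*q) < 1)%R) by (apply CmodP_lt; auto).
  assert (H1 : qp (q*q) (q*q) n <> 0) by (apply qp_nz; auto).
  assert (H5 := om_nz (q*q) n Hp).
  assert (H10 := op_nz (q * cp (q*q) n) ltac:(apply Cmod_cp_lt; auto)).
  assert (H11 := op_nz (q * q * cp (q*q) n) ltac:(apply Cmod_cp_lt; auto)).
  normcp. repeat rewrite cp_sq_S. normcp. field; repeat split; cbv beta; auto. Qed.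

Lemma A_last q n : (Cmod q < 1)%R ->
  aA q (S n) * KB (q*q) (q*q) (S n) (S n) = GA q n (S (S n)) - GA q n (S n).
Proof. intros Hq. unfold GA.
  replace (Nat.leb (S (S n)) (S n)) with false by (symmetry; apply Nat.leb_gt; lia).
  replace (Nat.leb (S n) (S n)) with true by (symmetry; apply Nat.leb_le; lia).
  unfold aA, KB, mA. rewrite !Nat.sub_diag.
  replace (S n + S n)%nat with (S (S (n + n))) by lia. replace (n + S n)%nat with (S (n + n)) by lia.
  replace (S (S (n + n)) - S n)%nat with (S n) by lia. simpl Nat.mul.
  simpl tri. rewrite !qp_S.
  assert (Hp : (Cmod (q*q) < 1)%R) by (apply CmodP_lt; auto).
  assert (H1 : qp (q*q) (q*q) (n + n) <> 0) by (apply qp_nz; auto).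
  assert (H5 := om_nz (q*q) (n + n) Hp). assert (H6 := om_nz (q*q) (S (n + n)) Hp).
  assert (H7 := om_nz (q*q) n Hp).
  assert (H10 := op_nz (q * cp (q*q) n) ltac:(apply Cmod_cp_lt; auto)).
  assert (H11 := op_nz (q * q * cp (q*q) n) ltac:(apply Cmod_cp_lt; auto)).
  simpl qp. normcp. repeat rewrite cp_sq_S. normcp. field; repeat split; cbv beta; auto. Qed.

Lemma A_finite q n : (Cmod q < 1)%R ->
  fsum (fun r => aA q r * KB (q*q) (q*q) n r) (S n) = bA q n.
Proof. intros Hq. assert (Hp : (Cmod (q*q) < 1)%R) by (apply CmodP_lt; auto). revert n.
  apply (rec_eq (fun n => fsum (fun r => aA q r * KB (q*q) (q*q) n r) (S n)) (bA q) (mA q)).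
  { simpl. unfold KB, bA. simpl. field. }
  { intros m. cbv beta. apply (tele_rec (aA q) (KB (q*q) (q*q)) (GA q m) (mA q m) m).
    { intros r Hr. destruct r. apply A_zero; auto. destruct (Nat.le_exists_sub (S r) m Hr) as [s [Hs _]].
      subst m. replace (s + S r)%nat with (S r + s)%nat by lia. apply A_generic; auto. }
    { apply A_last; auto. }
    { reflexivity. }
    { unfold GA. replace (Nat.leb (S (S m)) (S m)) with false by (symmetry; apply Nat.leb_gt; lia). auto. } }
  { intros m. unfold bA, mA. replace (S m + S m)%nat with (S (S (m + m))) by lia. rewrite !qp_S.
    assert (H1 : qp (q*q) (q*q) m <> 0) by (apply qp_nz; auto).
    assert (Hmq : (Cmod (-q) < 1)%R) by (rewrite Cmod_opp; auto).
    assert (H2 : qp (-q) q (m + m) <> 0) by (apply qp_nz; auto).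
    assert (H5 := om_nz (q*q) m Hp).
    assert (H10 := op_nz (q * cp (q*q) m) ltac:(apply Cmod_cp_lt; auto)).
    assert (H11 := op_nz (q * q * cp (q*q) m) ltac:(apply Cmod_cp_lt; auto)).
    normcp. field; repeat split; cbv beta; auto. }
Qed.

Lemma B_generic q r s : (Cmod q < 1)%R ->
  let n := (S r + s)%nat in
  aB q (S r) * KB (q*q) (q*q*(q*q)) (S n) (S r) - mA q n * (aB q (S r) * KB (q*q) (q*q*(q*q)) n (S r)) = GB q n (S (S r)) - GB q n (S r).
Proof. intros Hq n. unfold n. unfold GB.
  replace (Nat.leb (S (S r)) (S (S r + s))) with true by (symmetry; apply Nat.leb_le; lia).
  replace (Nat.leb (S r) (S (S r + s))) with true by (symmetry; apply Nat.leb_le; lia).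
  unfold aB, KB, mA.
  replace (S (S r + s) - S r)%nat with (S s) by lia.
  replace (S (S r + s) + S r)%nat with (S (S (S (r + r + s)))) by lia.
  replace (S r + s - S r)%nat with s by lia.
  replace (S r + s + S r)%nat with (S (S (r + r + s))) by lia.
  replace (S (S r + s) - S (S r))%nat with s by lia.
  replace (S r + s + S (S r))%nat with (S (S (S (r + r + s)))) by lia.
  replace (2 * (s))%nat with (s + s)%nat by lia.
  replace (2 * (S s))%nat with (S (S (s + s))) by lia.
  replace (S (S (S (S r + s + (S r + s) + (S r + s) + (S r + s)))) - S (S r))%nat with (S (S (S (S (S (r + r + r + s + s + s + s)))))) by lia.
  replace (S (S (S (S r + s + (S r + s) + (S r + s) + (S r + s)))) - S r)%nat with (S (S (S (S (S (S (r + r + r + s + s + s + s))))))) by lia.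
  simpl tri. rewrite !qp_S.
  assert (Hp : (Cmod (q*q) < 1)%R) by (apply CmodP_lt; auto).
  assert (Hpp : (Cmod (q*q*(q*q)) < 1)%R) by (apply CmodP_lt; auto).
  assert (H1 : qp (q*q) (q*q) s <> 0) by (apply qp_nz; auto).
  assert (H2 : qp (q*q*(q*q)) (q*q) (r + r + s) <> 0) by (apply qp_nz; auto).
  assert (H5 := om_nz (q*q) s Hp).
  assert (H6 := om2_nz (q*q) (r + r + s) Hp).
  assert (H7 := om2_nz (q*q) (S (r + r + s)) Hp). assert (H8 := om2_nz (q*q) (S (S (r + r + s))) Hp).
  assert (H9 := om_nz (q*q) (S r + s) Hp).
  assert (H10 := op_nz (q * cp (q*q) (S r + s)) ltac:(apply Cmod_cp_lt; auto)).
  assert (H11 := op_nz (q * q * cp (q*q) (S r + s)) ltac:(apply Cmod_cp_lt; auto; apply CmodP_lt; auto)).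
  assert (H12 := one_minus_ne0 (q*q) Hp).
  normcp. repeat rewrite cp_sq_S. normcp. field; repeat split; cbv beta; auto. Qed.

Lemma B_zero q n : (Cmod q < 1)%R ->
  aB q 0 * KB (q*q) (q*q*(q*q)) (S n) 0 - mA q n * (aB q 0 * KB (q*q) (q*q*(q*q)) n 0) = GB q n 1 - GB q n 0.
Proof. intros Hq. unfold GB.
  replace (Nat.leb 1 (S n)) with true by (symmetry; apply Nat.leb_le; lia).
  unfold aB, KB, mA. rewrite !Nat.sub_0_r, !Nat.add_0_r.
  replace (S n - 1)%nat with n by lia. replace (n + 1)%nat with (S n) by lia.
  replace (2 * n)%nat with (n + n)%nat by lia. replace (S (S (S (n + n + n + n))) - 1)%nat with (S (S (n + n + n + n))) by lia.
  simpl tri. rewrite !qp_S.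
  assert (Hp : (Cmod (q*q) < 1)%R) by (apply CmodP_lt; auto).
  assert (Hpp : (Cmod (q*q*(q*q)) < 1)%R) by (apply CmodP_lt; auto).
  assert (H1 : qp (q*q) (q*q) n <> 0) by (apply qp_nz; auto).
  assert (H2 : qp (q*q*(q*q)) (q*q) n <> 0) by (apply qp_nz; auto).
  assert (H5 := om_nz (q*q) n Hp). assert (H6 := om2_nz (q*q) n Hp).
  assert (H10 := op_nz (q * cp (q*q) n) ltac:(apply Cmod_cp_lt; auto)).
  assert (H11 := op_nz (q * q * cp (q*q) n) ltac:(apply Cmod_cp_lt; auto)).
  assert (H12 := one_minus_ne0 (q*q) Hp).
  normcp. repeat rewrite cp_sq_S. normcp. field; repeat split; cbv beta; auto. Qed.

Lemma B_last q n : (Cmod q < 1)%R ->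
  aB q (S n) * KB (q*q) (q*q*(q*q)) (S n) (S n) = GB q n (S (S n)) - GB q n (S n).
Proof. intros Hq. unfold GB.
  replace (Nat.leb (S (S n)) (S n)) with false by (symmetry; apply Nat.leb_gt; lia).
  replace (Nat.leb (S n) (S n)) with true by (symmetry; apply Nat.leb_le; lia).
  unfold aB, KB, mA. rewrite !Nat.sub_diag.
  replace (S n + S n)%nat with (S (S (n + n))) by lia. replace (n + S n)%nat with (S (n + n)) by lia.
  replace (S (S (S (n + n + n + n))) - S n)%nat with (S (S (n + n + n))) by lia.
  simpl tri. rewrite !qp_S.
  assert (Hp : (Cmod (q*q) < 1)%R) by (apply CmodP_lt; auto).
  assert (Hpp : (Cmod (q*q*(q*q)) < 1)%R) by (apply CmodP_lt; auto).
  assert (H1 : qp (q*q*(q*q)) (q*q) (n + n) <> 0) by (apply qp_nz; auto).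
  assert (H5 := om2_nz (q*q) (n + n) Hp). assert (H6 := om2_nz (q*q) (S (n + n)) Hp).
  assert (H7 := om_nz (q*q) n Hp).
  assert (H10 := op_nz (q * cp (q*q) n) ltac:(apply Cmod_cp_lt; auto)).
  assert (H11 := op_nz (q * q * cp (q*q) n) ltac:(apply Cmod_cp_lt; auto)).
  assert (H12 := one_minus_ne0 (q*q) Hp).
  simpl qp. normcp. repeat rewrite cp_sq_S. normcp. field; repeat split; cbv beta; auto. Qed.

Lemma B_finite q n : (Cmod q < 1)%R ->
  fsum (fun r => aB q r * KB (q*q) (q*q*(q*q)) n r) (S n) = bA q n.
Proof. intros Hq. assert (Hp : (Cmod (q*q) < 1)%R) by (apply CmodP_lt; auto). revert n.
  apply (rec_eq (fun n => fsum (fun r => aB q r * KB (q*q) (q*q*(q*q)) n r) (S n)) (bA q) (mA q)).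
  { simpl. unfold KB, bA, aB. simpl. field. apply one_minus_ne0; auto. }
  { intros m. cbv beta. apply (tele_rec (aB q) (KB (q*q) (q*q*(q*q))) (GB q m) (mA q m) m).
    { intros r Hr. destruct r. apply B_zero; auto. destruct (Nat.le_exists_sub (S r) m Hr) as [s [Hs _]].
      subst m. replace (s + S r)%nat with (S r + s)%nat by lia. apply B_generic; auto. }
    { apply B_last; auto. }
    { reflexivity. }
    { unfold GB. replace (Nat.leb (S (S m)) (S m)) with false by (symmetry; apply Nat.leb_gt; lia). auto. } }
  { intros m. unfold bA, mA. replace (S m + S m)%nat with (S (S (m + m))) by lia. rewrite !qp_S.
    assert (H1 : qp (q*q) (q*q) m <> 0) by (apply qp_nz; auto).
    assert (Hmq : (Cmod (-q) < 1)%R) by (rewrite Cmod_opp; auto).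
    assert (H2 : qp (-q) q (m + m) <> 0) by (apply qp_nz; auto).
    assert (H5 := om_nz (q*q) m Hp).
    assert (H10 := op_nz (q * cp (q*q) m) ltac:(apply Cmod_cp_lt; auto)).
    assert (H11 := op_nz (q * q * cp (q*q) m) ltac:(apply Cmod_cp_lt; auto)).
    normcp. field; repeat split; cbv beta; auto. }
Qed.

Lemma C_generic q r s : (Cmod q < 1)%R ->
  let n := (S r + s)%nat in
  aC q (S r) * KB (q*q) (q*q*(q*q)) (S n) (S r) - mC q n * (aC q (S r) * KB (q*q) (q*q*(q*q)) n (S r)) = GC q n (S (S r)) - GC q n (S r).
Proof. intros Hq n. unfold n. unfold GC.
  replace (Nat.leb (S (S r)) (S (S r + s))) with true by (symmetry; apply Nat.leb_le; lia).
  replace (Nat.leb (S r) (S (S r + s))) with true by (symmetry; apply Nat.leb_le; lia).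
  unfold aC, KB, mC.
  replace (S (S r + s) - S r)%nat with (S s) by lia.
  replace (S (S r + s) + S r)%nat with (S (S (S (r + r + s)))) by lia.
  replace (S r + s - S r)%nat with s by lia.
  replace (S r + s + S r)%nat with (S (S (r + r + s))) by lia.
  replace (S (S r + s) - S (S r))%nat with s by lia.
  replace (S r + s + S (S r))%nat with (S (S (S (r + r + s)))) by lia.
  replace (2 * (s))%nat with (s + s)%nat by lia.
  replace (2 * (S s))%nat with (S (S (s + s))) by lia.
  replace (S (S (S (S (S r + s + (S r + s) + (S r + s) + (S r + s))))) - S (S r))%nat with (S (S (S (S (S (S (r + r + r + s + s + s + s))))))) by lia.
  replace (S (S (S (S (S r + s + (S r + s) + (S r + s) + (S r + s))))) - S r)%nat with (S (S (S (S (S (S (S (r + r + r + s + s + s + s)))))))) by lia.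
  simpl tri. rewrite !qp_S.
  assert (Hp : (Cmod (q*q) < 1)%R) by (apply CmodP_lt; auto).
  assert (Hpp : (Cmod (q*q*(q*q)) < 1)%R) by (apply CmodP_lt; auto).
  assert (Hq3 : (Cmod (q*q*q) < 1)%R) by (apply CmodP_lt; auto).
  assert (H1 : qp (q*q) (q*q) s <> 0) by (apply qp_nz; auto).
  assert (H2 : qp (q*q*(q*q)) (q*q) (r + r + s) <> 0) by (apply qp_nz; auto).
  assert (H5 := om_nz (q*q) s Hp).
  assert (H6 := om2_nz (q*q) (r + r + s) Hp).
  assert (H7 := om2_nz (q*q) (S (r + r + s)) Hp). assert (H8 := om2_nz (q*q) (S (S (r + r + s))) Hp).
  assert (H9 := om_nz (q*q) (S r + s) Hp).
  assert (H10 := op_nz (q * q * cp (q*q) (S r + s)) ltac:(apply Cmod_cp_lt; auto)).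
  assert (H11 := op_nz (q * q * q * cp (q*q) (S r + s)) ltac:(apply Cmod_cp_lt; auto)).
  assert (H12 := one_minus_ne0 q Hq).
  normcp. repeat rewrite cp_sq_S. normcp. field; repeat split; cbv beta; auto. Qed.

Lemma C_zero q n : (Cmod q < 1)%R ->
  aC q 0 * KB (q*q) (q*q*(q*q)) (S n) 0 - mC q n * (aC q 0 * KB (q*q) (q*q*(q*q)) n 0) = GC q n 1 - GC q n 0.
Proof. intros Hq. unfold GC.
  replace (Nat.leb 1 (S n)) with true by (symmetry; apply Nat.leb_le; lia).
  unfold aC, KB, mC. rewrite !Nat.sub_0_r, !Nat.add_0_r.
  replace (S n - 1)%nat with n by lia. replace (n + 1)%nat with (S n) by lia.
  replace (2 * n)%nat with (n + n)%nat by lia. replace (S (S (S (S (n + n + n + n)))) - 1)%nat with (S (S (S (n + n + n + n)))) by lia.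
  simpl tri. rewrite !qp_S.
  assert (Hp : (Cmod (q*q) < 1)%R) by (apply CmodP_lt; auto).
  assert (Hpp : (Cmod (q*q*(q*q)) < 1)%R) by (apply CmodP_lt; auto).
  assert (Hq3 : (Cmod (q*q*q) < 1)%R) by (apply CmodP_lt; auto).
  assert (H1 : qp (q*q) (q*q) n <> 0) by (apply qp_nz; auto).
  assert (H2 : qp (q*q*(q*q)) (q*q) n <> 0) by (apply qp_nz; auto).
  assert (H5 := om_nz (q*q) n Hp). assert (H6 := om2_nz (q*q) n Hp).
  assert (H10 := op_nz (q * q * cp (q*q) n) ltac:(apply Cmod_cp_lt; auto)).
  assert (H11 := op_nz (q * q * q * cp (q*q) n) ltac:(apply Cmod_cp_lt; auto)).
  assert (H12 := one_minus_ne0 q Hq).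
  normcp. repeat rewrite cp_sq_S. normcp. field; repeat split; cbv beta; auto. Qed.

Lemma C_last q n : (Cmod q < 1)%R ->
  aC q (S n) * KB (q*q) (q*q*(q*q)) (S n) (S n) = GC q n (S (S n)) - GC q n (S n).
Proof. intros Hq. unfold GC.
  replace (Nat.leb (S (S n)) (S n)) with false by (symmetry; apply Nat.leb_gt; lia).
  replace (Nat.leb (S n) (S n)) with true by (symmetry; apply Nat.leb_le; lia).
  unfold aC, KB, mC. rewrite !Nat.sub_diag.
  replace (S n + S n)%nat with (S (S (n + n))) by lia. replace (n + S n)%nat with (S (n + n)) by lia.
  replace (S (S (S (S (n + n + n + n)))) - S n)%nat with (S (S (S (n + n + n)))) by lia.
  simpl tri. rewrite !qp_S.
  assert (Hp : (Cmod (q*q) < 1)%R) by (apply CmodP_lt; auto).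
  assert (Hpp : (Cmod (q*q*(q*q)) < 1)%R) by (apply CmodP_lt; auto).
  assert (Hq3 : (Cmod (q*q*q) < 1)%R) by (apply CmodP_lt; auto).
  assert (H1 : qp (q*q*(q*q)) (q*q) (n + n) <> 0) by (apply qp_nz; auto).
  assert (H5 := om2_nz (q*q) (n + n) Hp). assert (H6 := om2_nz (q*q) (S (n + n)) Hp).
  assert (H7 := om_nz (q*q) n Hp).
  assert (H10 := op_nz (q * q * cp (q*q) n) ltac:(apply Cmod_cp_lt; auto)).
  assert (H11 := op_nz (q * q * q * cp (q*q) n) ltac:(apply Cmod_cp_lt; auto)).
  assert (H12 := one_minus_ne0 q Hq).
  simpl qp. normcp. repeat rewrite cp_sq_S. normcp. field; repeat split; cbv beta; auto. Qed.

Lemma C_finite q n : (Cmod q < 1)%R ->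
  fsum (fun r => aC q r * KB (q*q) (q*q*(q*q)) n r) (S n) = bC q n.
Proof. intros Hq. assert (Hp : (Cmod (q*q) < 1)%R) by (apply CmodP_lt; auto). revert n.
  apply (rec_eq (fun n => fsum (fun r => aC q r * KB (q*q) (q*q*(q*q)) n r) (S n)) (bC q) (mC q)).
  { simpl. unfold KB, bC, aC. simpl. field. apply one_minus_ne0; auto. }
  { intros m. cbv beta. apply (tele_rec (aC q) (KB (q*q) (q*q*(q*q))) (GC q m) (mC q m) m).
    { intros r Hr. destruct r. apply C_zero; auto. destruct (Nat.le_exists_sub (S r) m Hr) as [s [Hs _]].
      subst m. replace (s + S r)%nat with (S r + s)%nat by lia. apply C_generic; auto. }
    { apply C_last; auto. }
    { reflexivity. }
    { unfold GC. replace (Nat.leb (S (S m)) (S m)) with false by (symmetry; apply Nat.leb_gt; lia). auto. } }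
  { intros m. unfold bC, mC. replace (S m + S m)%nat with (S (S (m + m))) by lia. rewrite !qp_S.
    assert (Hq3 : (Cmod (q*q*q) < 1)%R) by (apply CmodP_lt; auto).
    assert (H1 : qp (q*q) (q*q) m <> 0) by (apply qp_nz; auto).
    assert (Hmq : (Cmod (-(q*q)) < 1)%R) by (rewrite Cmod_opp; auto).
    assert (H2 : qp (-(q*q)) q (m + m) <> 0) by (apply qp_nz; auto).
    assert (H5 := om_nz (q*q) m Hp).
    assert (H10 := op_nz (q * q * cp (q*q) m) ltac:(apply Cmod_cp_lt; auto)).
    assert (H11 := op_nz (q * q * q * cp (q*q) m) ltac:(apply Cmod_cp_lt; auto)).
    normcp. field; repeat split; cbv beta; auto. }
Qed.


Lemma tri_swap (H : nat -> nat -> C) N :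
  fsum (fun n => fsum (fun r => H n r) (S n)) (S N) = fsum (fun r => fsum (fun m => H (r + m)%nat r) (S (N - r))) (S N).
Proof. induction N.
  - simpl. ring_simplify. auto.
  - change (fsum (fun n => fsum (fun r => H n r) (S n)) (S (S N))) with
      (fsum (fun n => fsum (fun r => H n r) (S n)) (S N) + fsum (fun r => H (S N) r) (S (S N))).
    rewrite IHN.
    change (fsum (fun r => fsum (fun m => H (r + m)%nat r) (S (S N - r))) (S (S N))) with
      (fsum (fun r => fsum (fun m => H (r + m)%nat r) (S (S N - r))) (S N) + fsum (fun m => H (S N + m)%nat (S N)) (S (S N - S N))).
    rewrite (fsum_ext (fun r => fsum (fun m => H (r + m)%nat r) (S (S N - r)))
                      (fun r => fsum (fun m => H (r + m)%nat r) (S (N - r)) + H (S N) r)).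
    2: { intros r Hr. replace (S N - r)%nat with (S (N - r)) by lia. simpl fsum at 1. f_equal. f_equal. lia. }
    rewrite fsum_plus. rewrite Nat.sub_diag.
    replace (fsum (fun m : nat => H (S N + m)%nat (S N)) 1) with (H (S N) (S N)) by (simpl; rewrite Nat.add_0_r; ring).
    change (fsum (fun r => H (S N) r) (S (S N))) with (fsum (fun r => H (S N) r) (S N) + H (S N) (S N)). rewrite Cplus_assoc. reflexivity. Qed.

Lemma bailey_inner p a ap (al : C) r M : (Cmod p < 1)%R -> (Cmod ap < 1)%R -> ap = a * p ->
  fsum (fun m => cp a (r+m) * cp p ((r+m)*(r+m)) * / qp p p (r + M - (r+m)) * (al * KB p ap (r+m) r)) (S M)
  = cp a r * cp p (r*r) * al * KB p ap (r+M) r.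
Proof. intros Hp Hap Ha.
  rewrite <- (Cmult_1_r (cp a r * cp p (r*r) * al * KB p ap (r+M) r)).
  rewrite <- (G_id p (a * cp p (r + r)) M Hp). rewrite <- fsum_scal.
  apply fsum_ext. intros m Hm. destruct (Nat.le_exists_sub m M ltac:(lia)) as [t [Ht _]]. subst M.
  rewrite qbin_qp by (auto; lia). unfold KB.
  replace (r + (t + m) - (r + m))%nat with t by lia. replace (r + m - r)%nat with m by lia.
  replace (t + m - m)%nat with t by lia.
  replace (r + (t + m) - r)%nat with (t + m)%nat by lia.
  replace (r + (t + m) + r)%nat with ((r + m + r) + t)%nat by lia.
  rewrite (qp_add ap p (r + m + r) t). replace (ap * cp p (r + m + r)) with (a * cp p (r + r) * cp p (S m)) by (rewrite Ha; normcp; ring).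
  assert (H1 : qp p p t <> 0) by (apply qp_nz; auto). assert (H2 : qp p p m <> 0) by (apply qp_nz; auto).
  assert (H3 : qp p p (t + m) <> 0) by (apply qp_nz; auto). assert (H4 : qp ap p (r + m + r) <> 0) by (apply qp_nz; auto).
  assert (H5 : qp (a * cp p (r + r) * cp p (S m)) p t <> 0).
  { replace (a * cp p (r + r) * cp p (S m)) with (ap * cp p (r + m + r)) by (rewrite Ha; normcp; ring). apply qp_nz; auto. apply Cmod_cp_lt; auto. }
  replace ((r + m) * (r + m))%nat with (r * r + m * m + (r + r) * m)%nat by nia.
  rewrite (cp_mult a (cp p (r + r)) m). rewrite <- (cp_mul p (r + r) m).
  rewrite !cp_add in *. field. repeat split; auto. Qed.

Lemma bailey_finite p a ap (al be : nat -> C) N : (Cmod p < 1)%R -> (Cmod ap < 1)%R -> ap = a * p ->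
  (forall n, fsum (fun r => al r * KB p ap n r) (S n) = be n) ->
  fsum (fun n => cp a n * cp p (n*n) * be n * / qp p p (N - n)) (S N) =
  fsum (fun r => cp a r * cp p (r*r) * al r * KB p ap N r) (S N).
Proof. intros Hp Hap Ha Hpair.
  rewrite (fsum_ext _ (fun n => fsum (fun r => cp a n * cp p (n*n) * / qp p p (N - n) * (al r * KB p ap n r)) (S n))).
  2: { intros n Hn. rewrite fsum_scal. rewrite Hpair. ring. }
  rewrite tri_swap. apply fsum_ext. intros r Hr.
  destruct (Nat.le_exists_sub r N ltac:(lia)) as [M [HM _]]. subst N. replace (M + r - r)%nat with M by lia.
  replace (M + r)%nat with (r + M)%nat by lia. apply bailey_inner; auto. Qed.

Lemma fall_bound p N k : (Cmod p < 1)%R -> (Cmod (fall p N k) <= 2 ^ k)%R.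
Proof. intros Hp. induction k; simpl. rewrite Cmod_1. lra. rewrite Cmod_mult.
  assert (Cmod (1 - cp p (N - k)) <= 2)%R. { unfold Cminus. eapply Rle_trans. apply Cmod_triangle. rewrite Cmod_opp, Cmod_1.
    assert (H := cp_le1 p (N - k) Hp). lra. }
  assert (0 <= Cmod (fall p N k))%R by apply Cmod_ge_0. assert (0 <= Cmod (1 - cp p (N - k)))%R by apply Cmod_ge_0. nra. Qed.

Lemma pow_sq_tri (x : R) n : (x ^ (n * n) = (x ^ 2) ^ tri n * x ^ n)%R.
Proof. rewrite <- pow_mult. rewrite <- pow_add. f_equal. pose proof (tri_eq n). lia. Qed.

Lemma bound_term (a p b : C) n B : (Cmod a <= 1)%R -> (Cmod b <= B * 2 ^ n)%R -> (0 <= B)%R ->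
  (Cmod (cp a n * cp p (n*n) * b) <= B * (Cmod p ^ 2) ^ tri n * (2 * Cmod p) ^ n)%R.
Proof. intros Ha Hb HB. rewrite !Cmod_mult, !cp_Cmod.
  assert (0 <= Cmod a)%R by apply Cmod_ge_0. assert (Cmod a ^ n <= 1)%R by (apply pow_le_one; lra).
  assert (0 <= Cmod a ^ n)%R by (apply pow_le; lra).
  assert (0 <= Cmod p)%R by apply Cmod_ge_0.
  rewrite pow_sq_tri. rewrite Rpow_mult_distr.
  assert (0 <= (Cmod p ^ 2) ^ tri n)%R by (apply pow_le; apply pow_le; lra).
  assert (0 <= Cmod p ^ n)%R by (apply pow_le; lra).
  assert (0 <= Cmod b)%R by apply Cmod_ge_0.
  assert (0 <= (Cmod p ^ 2) ^ tri n * Cmod p ^ n)%R by (apply Rmult_le_pos; auto).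
  apply Rle_trans with (1 * ((Cmod p ^ 2) ^ tri n * Cmod p ^ n) * (B * 2 ^ n))%R.
  { apply Rmult_le_compat; auto. apply Rmult_le_pos; auto. apply Rmult_le_compat_r; auto. }
  right. ring. Qed.

Lemma summR_bailey B p : (0 <= B)%R -> (Cmod p < 1)%R -> summR (fun n => B * (Cmod p ^ 2) ^ tri n * (2 * Cmod p) ^ n)%R.
Proof. intros HB Hp. assert (0 <= Cmod p)%R by apply Cmod_ge_0. apply summR_quad; auto. split. apply pow_le; lra.
  simpl. nra. lra. Qed.

Lemma bailey_limit p a ap (al be : nat -> C) Bal Bbe : (Cmod p < 1)%R -> (Cmod a <= 1)%R -> (Cmod ap < 1)%R -> ap = a * p ->
  (forall n, fsum (fun r => al r * KB p ap n r) (S n) = be n) ->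
  (forall n, Cmod (be n) <= Bbe)%R -> (forall r, Cmod (al r) <= Bal)%R -> (0 <= Bbe)%R -> (0 <= Bal)%R ->
  exists SL SR Lap, serC (fun n => cp a n * cp p (n*n) * be n) SL /\ serC (fun r => cp a r * cp p (r*r) * al r) SR /\
    limC (qp ap p) Lap /\ Lap <> 0 /\ SL * Lap = SR.
Proof. intros Hp Ha Hap Haa Hpair Hbe Hal HBbe HBal.
  destruct (qp_conv ap p Hap Hp) as [L [Lap [HL [HLap [HLlow [_ HLl]]]]]].
  assert (HLap0 : Lap <> 0). { intro E. rewrite E, Cmod_0 in HLl. lra. }
  assert (EN : forall N, fsum (fun n => cp a n * cp p (n*n) * be n * fall p N n) (S N) =
                         fsum (fun r => cp a r * cp p (r*r) * al r * (fall p N r * / qp ap p (N + r))) (S N)).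
  { intros N. assert (E := bailey_finite p a ap al be N Hp Hap Haa Hpair).
    apply (f_equal (fun z => qp p p N * z)) in E. rewrite <- !fsum_scal in E.
    rewrite (fsum_ext _ (fun n => qp p p N * (cp a n * cp p (n * n) * be n * / qp p p (N - n)))).
    rewrite E. apply fsum_ext. intros r Hr. unfold KB. rewrite <- (fall_qp p N r) by lia.
    field. split; apply qp_nz; auto.
    intros n Hn. rewrite <- (fall_qp p N n) by lia. field. apply qp_nz; auto. }
  destruct (tannery (fun N n => cp a n * cp p (n*n) * be n * fall p N n) (fun n => cp a n * cp p (n*n) * be n)
             (fun n => Bbe * (Cmod p ^ 2) ^ tri n * (2 * Cmod p) ^ n)%R (fun N => S N)) as [l1 [Hl1 Hlim1]].
  { intros n. assert (H := limC_scal (cp a n * cp p (n*n) * be n) _ _ (fall_lim p n Hp)). rewrite Cmult_1_r in H. exact H. }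
  { intros N n. rewrite <- Cmult_assoc. apply bound_term; auto. rewrite Cmod_mult.
    assert (H := fall_bound p N n Hp). assert (0 <= Cmod (be n))%R by apply Cmod_ge_0.
    assert (0 <= Cmod (fall p N n))%R by apply Cmod_ge_0. specialize (Hbe n). nra. }
  { apply summR_bailey; auto. }
  { intros; lia. }
  destruct (tannery (fun N r => cp a r * cp p (r*r) * al r * (fall p N r * / qp ap p (N + r)))
             (fun r => cp a r * cp p (r*r) * al r * / Lap)
             (fun r => (Bal / L) * (Cmod p ^ 2) ^ tri r * (2 * Cmod p) ^ r)%R (fun N => S N)) as [l2 [Hl2 Hlim2]].
  { intros r. apply limC_scal. replace (/ Lap) with (1 * / Lap) by ring. apply limC_mult. apply fall_lim; auto.
    apply limC_inv; auto. apply (limC_sub (qp ap p) Lap (fun N => N + r)%nat); auto. intros; lia. }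
  { intros N r. rewrite <- Cmult_assoc. apply bound_term; auto. rewrite !Cmod_mult. rewrite Cmod_inv by (apply qp_nz; auto).
    assert (H := fall_bound p N r Hp). assert (0 <= Cmod (al r))%R by apply Cmod_ge_0.
    assert (0 <= Cmod (fall p N r))%R by apply Cmod_ge_0. specialize (Hal r).
    assert (H2 := HLlow (N + r)%nat). assert (0 < Cmod (qp ap p (N + r)))%R by lra.
    assert (/ Cmod (qp ap p (N + r)) <= / L)%R by (apply Rinv_le_contravar; auto).
    assert (0 <= / Cmod (qp ap p (N + r)))%R by (left; apply Rinv_0_lt_compat; auto).
    unfold Rdiv. replace (Bal * / L * 2 ^ r)%R with (Bal * (2 ^ r * / L))%R by ring.
    apply Rmult_le_compat; auto. { apply Rmult_le_pos; auto. } { apply Rmult_le_compat; auto. } { unfold Rdiv; apply Rmult_le_pos; auto; left; apply Rinv_0_lt_compat; auto. } }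
  { apply summR_bailey; auto. apply Rmult_le_pos; auto. left; apply Rinv_0_lt_compat; auto. }
  { intros; lia. }
  assert (Hl12 : l1 = l2). { apply (limC_unique (fun N => fsum (fun n => cp a n * cp p (n*n) * be n * fall p N n) (S N))); auto.
    apply limC_ext with (fun N => fsum (fun r => cp a r * cp p (r*r) * al r * (fall p N r * / qp ap p (N + r))) (S N)); auto.
    exists O. intros. symmetry. apply EN. }
  exists l1, (l2 * Lap), Lap. split; auto. split.
  { apply serC_ext with (fun r => Lap * (cp a r * cp p (r * r) * al r * / Lap)). intros r. field; auto.
    replace (l2 * Lap) with (Lap * l2) by ring. apply serC_scal; auto. }
  split; auto. split; auto. rewrite Hl12. auto. Qed.


Lemma euler p x : (Cmod p < 1)%R -> (Cmod x < 1)%R ->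
  exists E, limC (qp (-x) p) E /\ serC (fun k => cp p (tri k) * cp x k / qp p p k) E.
Proof. intros Hp Hx. assert (Hmx : (Cmod (-x) < 1)%R) by (rewrite Cmod_opp; auto).
  destruct (qp_conv (-x) p Hmx Hp) as [L0 [E0 [_ [HE0 _]]]].
  destruct (qbin_bound p Hp) as [B [HB HBn]].
  destruct (tannery (fun N k => qbin p N k * cp p (tri k) * cp x k) (fun k => / qp p p k * cp p (tri k) * cp x k)
     (fun k => B * Cmod p ^ tri k * Cmod x ^ k)%R (fun N => S N)) as [l [Hl1 Hl2]].
  { intros k. apply limC_mult. apply limC_mult. apply qbin_lim; auto. apply limC_const. apply limC_const. }
  { intros N k. rewrite !Cmod_mult, !cp_Cmod. assert (H := HBn N k).
    assert (0 <= Cmod p ^ tri k)%R by (apply pow_le; apply Cmod_ge_0). assert (0 <= Cmod x ^ k)%R by (apply pow_le; apply Cmod_ge_0).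
    assert (0 <= Cmod (qbin p N k))%R by apply Cmod_ge_0.
    apply Rmult_le_compat; auto. apply Rmult_le_pos; auto. apply Rmult_le_compat; lra. lra. }
  { apply summR_quad. lra. split; auto. apply Cmod_ge_0. apply Cmod_ge_0. }
  { intros; lia. }
  assert (E : l = E0). { apply (limC_unique (qp (-x) p)); auto. apply limC_ext with (fun N => fsum (fun k => qbin p N k * cp p (tri k) * cp x k) (S N)); auto.
    exists O. intros. symmetry. apply qbinom_thm; auto. }
  exists E0. split; auto. apply serC_ext with (fun k => / qp p p k * cp p (tri k) * cp x k). intros. unfold Cdiv. ring.
  rewrite <- E. auto. Qed.

Lemma pair_split a q n : qp a (q*q) n * qp (a*q) (q*q) n = qp a q (n+n).
Proof. induction n. simpl. ring. replace (S n + S n)%nat with (S (S (n + n))) by lia. rewrite !qp_S. rewrite <- IHn.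
  replace (cp q (S (n + n))) with (q * cp (q*q) n) by (normcp; ring). replace (cp q (n + n)) with (cp (q*q) n) by (normcp; ring). ring. Qed.

Lemma cp_lt1 q m : (Cmod q < 1)%R -> (Cmod (cp q (S m)) < 1)%R.
Proof. intros H. rewrite cp_S. replace (q * cp q m) with (q * cp q m) by ring. apply Cmod_cp_lt; auto. Qed.

Lemma EE_prod q m E1 E2 W : (Cmod q < 1)%R ->
  limC (qp (- cp q (S m)) (q*q)) E1 -> limC (qp (- cp q (S (S m))) (q*q)) E2 -> limC (qp (-q) q) W ->
  qp (-q) q m * (E1 * E2) = W.
Proof. intros Hq H1 H2 HW.
  assert (Hl : limC (fun n => qp (-q) q m * (qp (- cp q (S m)) (q*q) n * qp (- cp q (S (S m))) (q*q) n)) (qp (-q) q m * (E1 * E2))).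
  { apply limC_scal. apply limC_mult; auto. }
  apply (limC_unique _ _ _ Hl). apply limC_ext with (fun n => qp (-q) q (m + (n + n))).
  { exists O. intros n _. replace (- cp q (S (S m))) with (- cp q (S m) * q) by (simpl; ring). rewrite pair_split.
    rewrite qp_add. replace (- q * cp q m) with (- cp q (S m)) by (simpl; ring). auto. }
  apply (limC_sub (qp (-q) q) W (fun n => m + (n + n))%nat); auto. intros; lia. Qed.

Lemma qp_prod_sq q n : qp q q n * qp (-q) q n = qp (q*q) (q*q) n.
Proof. induction n. simpl. ring. rewrite !qp_S. rewrite <- IHn. replace (cp (q*q) n) with (cp q n * cp q n) by (normcp; ring). ring. Qed.

Lemma serC_delta : serC (fun r => match r with O => -1 | S _ => 0 end) (-1).
Proof. intros eps He. exists 1%nat. intros n Hn. destruct n. lia.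
  replace (fsum (fun r => match r with O => -1 | S _ => 0 end) (S n)) with (RtoC (-1)).
  replace (RtoC (-1) - RtoC (-1)) with (RtoC 0) by ring. rewrite Cmod_0. auto.
  clear Hn. induction n. simpl. ring. change (fsum (fun r => match r with O => -1 | S _ => 0 end) (S (S n))) with
   (fsum (fun r => match r with O => -1 | S _ => 0 end) (S n) + 0). rewrite <- IHn. ring. Qed.


Lemma cp_sq (x : C) r : cp x (r * r) = cp x (tri r) * cp x (tri r) * cp x r.
Proof. replace (r * r)%nat with (tri r + tri r + r)%nat by (pose proof (tri_eq r); lia). rewrite !cp_add. ring. Qed.

Ltac normq := normcp; repeat rewrite cp_sq in *; simpl tri in *; normcp; rewrite ?cp_one in *.

Definition uJ (z w : C) (k : nat) : C := cp (-1) k * cp (z*w) (tri k) * cp z k.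

Lemma uJ_conv z w : (Cmod z < 1)%R -> (Cmod w < 1)%R -> exists U, serC (uJ z w) U.
Proof. intros Hz Hw. apply abs_conv with (fun k => 1 * Cmod (z*w) ^ tri k * 1 ^ k)%R.
  { intros k. unfold uJ. rewrite !Cmod_mult, Cmod_m1_pow, !cp_Cmod, pow1. rewrite <- Cmod_mult.
    assert (0 <= Cmod z)%R by apply Cmod_ge_0. assert (Cmod z ^ k <= 1)%R by (apply pow_le_one; lra).
    assert (0 <= Cmod (z * w) ^ tri k)%R by (apply pow_le; apply Cmod_ge_0). nra. }
  { apply summR_quad. lra. split. apply Cmod_ge_0. apply CmodP_lt; auto. lra. } Qed.

Lemma cJ_uv z w : (Cmod z < 1)%R -> (Cmod w < 1)%R -> forall SJ, serC (cJ z w) SJ ->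
  exists U V, serC (uJ z w) U /\ serC (uJ w z) V /\ SJ = U + V - 1.
Proof. intros Hz Hw SJ HSJ. destruct (uJ_conv z w Hz Hw) as [U HU]. destruct (uJ_conv w z Hw Hz) as [V HV].
  exists U, V. split; auto. split; auto. apply (serC_unique (cJ z w)); auto.
  replace (U + V - 1) with ((U + V) + (-1)) by ring.
  apply serC_ext with (fun r => (uJ z w r + uJ w z r) + match r with O => -1 | S _ => 0 end).
  { intros r. destruct r; unfold uJ, cJ; simpl. ring. replace (w * z) with (z * w) by ring. ring. }
  apply serC_plus. apply serC_plus; auto. apply serC_delta. Qed.

Lemma cm_bound_inv (q : C) : (Cmod q < 1)%R -> exists B, (0 <= B)%R /\ forall n, (Cmod (bA q n) <= B)%R.
Proof. intros Hq. assert (Hp : (Cmod (q*q) < 1)%R) by (apply CmodP_lt; auto).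
  assert (Hmq : (Cmod (-q) < 1)%R) by (rewrite Cmod_opp; auto).
  destruct (qp_conv (q*q) (q*q) Hp Hp) as [L1 [_ [HL1 [_ [H1 _]]]]].
  destruct (qp_conv (-q) q Hmq Hq) as [L2 [_ [HL2 [_ [H2 _]]]]].
  exists (/ (L1 * L2))%R. split. left. apply Rinv_0_lt_compat. apply Rmult_lt_0_compat; auto.
  intros n. unfold bA. rewrite Cmod_inv. 2: { apply Cmult_neq_0; apply qp_nz; auto. }
  rewrite Cmod_mult. apply Rinv_le_contravar. apply Rmult_lt_0_compat; auto.
  apply Rmult_le_compat; try lra. apply H1. apply H2. Qed.

Lemma cm_bound_invC (q : C) : (Cmod q < 1)%R -> exists B, (0 <= B)%R /\ forall n, (Cmod (bC q n) <= B)%R.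
Proof. intros Hq. assert (Hp : (Cmod (q*q) < 1)%R) by (apply CmodP_lt; auto).
  assert (Hmq : (Cmod (-(q*q)) < 1)%R) by (rewrite Cmod_opp; auto).
  destruct (qp_conv (q*q) (q*q) Hp Hp) as [L1 [_ [HL1 [_ [H1 _]]]]].
  destruct (qp_conv (-(q*q)) q Hmq Hq) as [L2 [_ [HL2 [_ [H2 _]]]]].
  exists (/ (L1 * L2))%R. split. left. apply Rinv_0_lt_compat. apply Rmult_lt_0_compat; auto.
  intros n. unfold bC. rewrite Cmod_inv. 2: { apply Cmult_neq_0; apply qp_nz; auto. }
  rewrite Cmod_mult. apply Rinv_le_contravar. apply Rmult_lt_0_compat; auto.
  apply Rmult_le_compat; try lra. apply H1. apply H2. Qed.

Lemma Cmod_cp_le1 q e : (Cmod q < 1)%R -> (Cmod (cp q e) <= 1)%R.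
Proof. intros. apply cp_le1; auto. Qed.

Lemma aA_bound q r : (Cmod q < 1)%R -> (Cmod (aA q r) <= 2)%R.
Proof. intros Hq. destruct r. simpl. rewrite Cmod_1. lra. unfold aA. rewrite !Cmod_mult, Cmod_m1_pow.
  assert (H1 := Cmod_cp_le1 q (S r * S r + tri (S r)) Hq). assert (0 <= Cmod (cp q (S r * S r + tri (S r))))%R by apply Cmod_ge_0.
  assert (Cmod (1 + cp q (S r)) <= 2)%R. { eapply Rle_trans. apply Cmod_triangle. rewrite Cmod_1. assert (Hh := Cmod_cp_le1 q (S r) Hq). lra. }
  assert (0 <= Cmod (1 + cp q (S r)))%R by apply Cmod_ge_0. nra. Qed.

Lemma aBC_bound q (d : C) r e1 e2 : (Cmod q < 1)%R -> d <> 0 ->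
  (Cmod (cp (-1) r * cp q e1 * (1 - cp q e2) / d) <= 2 / Cmod d)%R.
Proof. intros Hq Hd. rewrite Cmod_div by auto. rewrite !Cmod_mult, Cmod_m1_pow.
  assert (H1 := Cmod_cp_le1 q e1 Hq). assert (0 <= Cmod (cp q e1))%R by apply Cmod_ge_0.
  assert (Cmod (1 - cp q e2) <= 2)%R. { unfold Cminus. eapply Rle_trans. apply Cmod_triangle. rewrite Cmod_1, Cmod_opp. assert (Hh := Cmod_cp_le1 q e2 Hq). lra. }
  assert (0 <= Cmod (1 - cp q e2))%R by apply Cmod_ge_0. assert (0 < Cmod d)%R by (apply Cmod_gt_0; auto).
  unfold Rdiv. apply Rmult_le_compat_r. left; apply Rinv_0_lt_compat; auto. nra. Qed.

Lemma cp37 q a b c : (a + b = c)%nat -> cp q a * cp q b = cp q c.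
Proof. intros H. rewrite <- cp_add, H. auto. Qed.

Lemma RS_A q : (Cmod q < 1)%R ->
  exists SL Lpp Lz Lw LP, serC (fun n => cp (q*q) (n*n) * bA q n) SL /\ limC (qp (q*q) (q*q)) Lpp /\
    limC (qp (cp q 3) (cp q 7)) Lz /\ limC (qp (cp q 4) (cp q 7)) Lw /\ limC (qp (cp q 7) (cp q 7)) LP /\
    SL * Lpp = Lz * Lw * LP.
Proof. intros Hq. assert (Hp : (Cmod (q*q) < 1)%R) by (apply CmodP_lt; auto).
  destruct (cm_bound_inv q Hq) as [Bb [HBb HBbn]].
  destruct (bailey_limit (q*q) 1 (q*q) (aA q) (bA q) 2 Bb) as [SL [SR [Lap [HSL [HSR [HLap [HLap0 HE]]]]]]]; auto.
  { rewrite Cmod_1. lra. } { ring. } { intros n. apply A_finite; auto. } { intros; apply aA_bound; auto. } { lra. }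
  assert (H3 : (Cmod (cp q 3) < 1)%R) by (apply cp_lt1; auto). assert (H4 : (Cmod (cp q 4) < 1)%R) by (apply cp_lt1; auto).
  destruct (JT_inf (cp q 3) (cp q 4) H3 H4) as [Lz [Lw [LP [SJ [Hz [Hw [HP [HSJ HSJe]]]]]]]].
  rewrite (cp37 q 3 4 7) in * by auto.
  assert (E : SR = SJ).
  { apply (serC_unique (fun r => cp 1 r * cp (q * q) (r * r) * aA q r)); auto.
    apply serC_ext with (cJ (cp q 3) (cp q 4)); auto. intros r. destruct r. simpl. ring.
    unfold cJ, aA. normq. ring. }
  exists SL, Lap, Lz, Lw, LP. split.
  { apply serC_ext with (fun n => cp 1 n * cp (q * q) (n * n) * bA q n); auto. intros. rewrite cp_one. ring. }
  split; auto. split; auto. split; auto. split; auto. rewrite HE, E. auto. Qed.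

Lemma Lpp_rel q Lpp Lap : (Cmod q < 1)%R -> limC (qp (q*q) (q*q)) Lpp -> limC (qp (q*q*(q*q)) (q*q)) Lap -> Lpp = (1 - q*q) * Lap.
Proof. intros Hq H1 H2. apply (limC_unique (fun n => qp (q*q) (q*q) (S n))).
  apply (limC_sub (qp (q*q) (q*q)) Lpp S); auto.
  apply limC_ext with (fun n => (1 - q*q) * qp (q*q*(q*q)) (q*q) n). exists O. intros. rewrite qp_S_left. auto.
  apply limC_scal; auto. Qed.

Lemma RS_B q : (Cmod q < 1)%R ->
  exists SL Lpp Lz Lw LP, serC (fun n => cp (q*q) n * cp (q*q) (n*n) * bA q n) SL /\ limC (qp (q*q) (q*q)) Lpp /\
    limC (qp (cp q 2) (cp q 7)) Lz /\ limC (qp (cp q 5) (cp q 7)) Lw /\ limC (qp (cp q 7) (cp q 7)) LP /\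
    SL * Lpp = Lz * Lw * LP.
Proof. intros Hq. assert (Hp : (Cmod (q*q) < 1)%R) by (apply CmodP_lt; auto).
  assert (Hpp : (Cmod (q*q*(q*q)) < 1)%R) by (apply CmodP_lt; auto).
  assert (Hd : 1 - q*q <> 0) by (apply one_minus_ne0; auto).
  destruct (cm_bound_inv q Hq) as [Bb [HBb HBbn]].
  destruct (bailey_limit (q*q) (q*q) (q*q*(q*q)) (aB q) (bA q) (2 / Cmod (1 - q*q)) Bb) as [SL [SR [Lap [HSL [HSR [HLap [HLap0 HE]]]]]]]; auto.
  { lra. } { intros n. apply B_finite; auto. } { intros; apply aBC_bound; auto. }
  { unfold Rdiv. apply Rmult_le_pos. lra. left. apply Rinv_0_lt_compat. apply Cmod_gt_0; auto. }
  assert (H3 : (Cmod (cp q 2) < 1)%R) by (apply cp_lt1; auto). assert (H4 : (Cmod (cp q 5) < 1)%R) by (apply cp_lt1; auto).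
  destruct (JT_inf (cp q 2) (cp q 5) H3 H4) as [Lz [Lw [LP [SJ [Hz [Hw [HP [HSJ HSJe]]]]]]]].
  destruct (cJ_uv (cp q 2) (cp q 5) H3 H4 SJ HSJ) as [U [V [HU [HV HUV]]]].
  rewrite (cp37 q 2 5 7) in * by auto.
  assert (E : SR = / (1 - q*q) * (V + (U - 1))).
  { apply (serC_unique (fun r => cp (q*q) r * cp (q * q) (r * r) * aB q r)); auto.
    apply serC_ext with (fun r => / (1 - q*q) * (uJ (cp q 5) (cp q 2) r + uJ (cp q 2) (cp q 5) (S r))).
    { intros r. unfold uJ, aB. normq. field. auto. }
    apply serC_scal. replace (U - 1) with (U - uJ (cp q 2) (cp q 5) O) by (unfold uJ; simpl; ring).
    apply serC_plus; auto. apply serC_shift; auto. }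
  destruct (qp_conv (q*q) (q*q) Hp Hp) as [L [Lpp [_ [HLpp _]]]].
  exists SL, Lpp, Lz, Lw, LP. split; auto. split; auto. split; auto. split; auto. split; auto.
  rewrite (Lpp_rel q Lpp Lap Hq HLpp HLap). rewrite <- HSJe, HUV.
  replace (SL * ((1 - q * q) * Lap)) with ((1 - q*q) * (SL * Lap)) by ring. rewrite HE, E. field. auto. Qed.

Lemma RS_C q : (Cmod q < 1)%R ->
  exists SL Lpp Lz Lw LP, serC (fun n => cp (q*q) n * cp (q*q) (n*n) * bC q n) SL /\ limC (qp (q*q) (q*q)) Lpp /\
    limC (qp (cp q 1) (cp q 7)) Lz /\ limC (qp (cp q 6) (cp q 7)) Lw /\ limC (qp (cp q 7) (cp q 7)) LP /\
    SL * Lpp = (1 + q) * (Lz * Lw * LP).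
Proof. intros Hq. assert (Hp : (Cmod (q*q) < 1)%R) by (apply CmodP_lt; auto).
  assert (Hpp : (Cmod (q*q*(q*q)) < 1)%R) by (apply CmodP_lt; auto).
  assert (Hd : 1 - q <> 0) by (apply one_minus_ne0; auto).
  destruct (cm_bound_invC q Hq) as [Bb [HBb HBbn]].
  destruct (bailey_limit (q*q) (q*q) (q*q*(q*q)) (aC q) (bC q) (2 / Cmod (1 - q)) Bb) as [SL [SR [Lap [HSL [HSR [HLap [HLap0 HE]]]]]]]; auto.
  { lra. } { intros n. apply C_finite; auto. } { intros; apply aBC_bound; auto. }
  { unfold Rdiv. apply Rmult_le_pos. lra. left. apply Rinv_0_lt_compat. apply Cmod_gt_0; auto. }
  assert (H3 : (Cmod (cp q 1) < 1)%R) by (apply cp_lt1; auto). assert (H4 : (Cmod (cp q 6) < 1)%R) by (apply cp_lt1; auto).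
  destruct (JT_inf (cp q 1) (cp q 6) H3 H4) as [Lz [Lw [LP [SJ [Hz [Hw [HP [HSJ HSJe]]]]]]]].
  destruct (cJ_uv (cp q 1) (cp q 6) H3 H4 SJ HSJ) as [U [V [HU [HV HUV]]]].
  rewrite (cp37 q 1 6 7) in * by auto.
  assert (E : SR = / (1 - q) * (V + (U - 1))).
  { apply (serC_unique (fun r => cp (q*q) r * cp (q * q) (r * r) * aC q r)); auto.
    apply serC_ext with (fun r => / (1 - q) * (uJ (cp q 6) (cp q 1) r + uJ (cp q 1) (cp q 6) (S r))).
    { intros r. unfold uJ, aC. normq. field. auto. }
    apply serC_scal. replace (U - 1) with (U - uJ (cp q 1) (cp q 6) O) by (unfold uJ; simpl; ring).
    apply serC_plus; auto. apply serC_shift; auto. }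
  destruct (qp_conv (q*q) (q*q) Hp Hp) as [L [Lpp [_ [HLpp _]]]].
  exists SL, Lpp, Lz, Lw, LP. split; auto. split; auto. split; auto. split; auto. split; auto.
  rewrite (Lpp_rel q Lpp Lap Hq HLpp HLap). rewrite <- HSJe, HUV.
  replace (SL * ((1 - q * q) * Lap)) with ((1 - q*q) * (SL * Lap)) by ring. rewrite HE, E. field. auto. Qed.


Lemma triple_frame (t : nat -> nat -> nat -> C) (f : nat -> C) S :
  (forall i, exists g, (forall j, serC (t i j) (g j)) /\ serC g (f i)) -> serC f S -> is_series3 t S.
Proof. intros H HS. exists f. split. intros i. destruct (H i) as [g [Hg1 Hg2]]. exists g. split.
  intros j. apply serC_is_series. apply serC_ext with (t i j); auto. apply serC_is_series; auto.
  apply serC_is_series; auto. Qed.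

Lemma to_qinf a b P : limC (qp a b) P -> is_qpoch_inf a b P.
Proof. intros H. unfold is_qpoch_inf. apply limC_filterlim. apply limC_ext with (qp a b); auto.
  exists O. intros. symmetry. apply qpoch_qp. Qed.

Lemma cp_split3 q e0 k b : cp q e0 * (cp (q*q) (tri k) * cp (cp q b) k) = cp q (e0 + (2 * tri k + b * k)).
Proof. rewrite !cp_add. rewrite !cp_mul. replace (cp q 2) with (q * q) by (simpl; ring). auto. Qed.

Lemma euler_step q (c : C) e0 b (h : nat -> C) E : (Cmod q < 1)%R -> (Cmod (cp q b) < 1)%R ->
  limC (qp (-(cp q b)) (q*q)) E ->
  (forall k, h k = cp q (e0 + (2 * tri k + b * k)) * c / qp (q*q) (q*q) k) -> serC h (cp q e0 * c * E).
Proof. intros Hq Hb HE Hh. assert (Hp : (Cmod (q*q) < 1)%R) by (apply CmodP_lt; auto).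
  destruct (euler (q*q) (cp q b) Hp Hb) as [E' [HE' HS]].
  assert (E = E') by (apply (limC_unique _ _ _ HE HE')). subst E'.
  apply serC_ext with (fun k => cp q e0 * c * (cp (q * q) (tri k) * cp (cp q b) k / qp (q * q) (q * q) k)).
  { intros k. rewrite Hh. rewrite <- cp_split3. field. apply qp_nz; auto. }
  apply serC_scal; auto. Qed.

Lemma den_conv q i j k : qpoch (pow_n q 2) (pow_n q 2) i * qpoch (pow_n q 2) (pow_n q 2) j * qpoch (pow_n q 2) (pow_n q 2) k
   = qp (q*q) (q*q) i * qp (q*q) (q*q) j * qp (q*q) (q*q) k.
Proof. rewrite !qpoch_qp, !pow_n_cp. replace (cp q 2) with (q*q) by (simpl; ring). auto. Qed.

Lemma W_exists q : (Cmod q < 1)%R -> exists W Lq, limC (qp (-q) q) W /\ limC (qp q q) Lq /\ W <> 0 /\ Lq <> 0 /\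
   limC (qp (q*q) (q*q)) (Lq * W).
Proof. intros Hq. assert (Hmq : (Cmod (-q) < 1)%R) by (rewrite Cmod_opp; auto).
  destruct (qp_conv (-q) q Hmq Hq) as [L1 [W [HL1 [HW [_ [_ HW1]]]]]].
  destruct (qp_conv q q Hq Hq) as [L2 [Lq [HL2 [HLq [_ [_ HLq1]]]]]].
  exists W, Lq. split; auto. split; auto. split. intro E; rewrite E, Cmod_0 in HW1; lra. split. intro E; rewrite E, Cmod_0 in HLq1; lra.
  apply limC_ext with (fun n => qp q q n * qp (-q) q n). exists O. intros. apply qp_prod_sq. apply limC_mult; auto. Qed.

Lemma id1 q : (Cmod q < 1)%R ->
  exists S P1 P2 P3 Pq,
     is_series3 (fun i j k =>
       pow_n q (2*i*i + j*j + k*k + 2*i*j + 2*i*k + k) /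
       (qpoch (pow_n q 2) (pow_n q 2) i * qpoch (pow_n q 2) (pow_n q 2) j * qpoch (pow_n q 2) (pow_n q 2) k)) S /\
     is_qpoch_inf (pow_n q 3) (pow_n q 7) P1 /\ is_qpoch_inf (pow_n q 4) (pow_n q 7) P2 /\
     is_qpoch_inf (pow_n q 7) (pow_n q 7) P3 /\ is_qpoch_inf q q Pq /\
     S = P1 * P2 * P3 / Pq.
Proof. intros Hq. assert (Hp : (Cmod (q*q) < 1)%R) by (apply CmodP_lt; auto).
  destruct (W_exists q Hq) as [W [Lq [HW [HLq [HW0 [HLq0 HLpp']]]]]].
  destruct (RS_A q Hq) as [SL [Lpp [Lz [Lw [LP [HSL [HLpp [Hz [Hw [HP HE]]]]]]]]]].
  assert (Lpp = Lq * W) by (apply (limC_unique _ _ _ HLpp HLpp')). subst Lpp.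
  exists (W * SL), Lz, Lw, LP, Lq. split.
  2: { rewrite !pow_n_cp. split. apply to_qinf; auto. split. apply to_qinf; auto. split. apply to_qinf; auto. split. apply to_qinf; auto.
       rewrite <- HE. field. auto. }
  apply triple_frame with (fun i => W * (cp (q*q) (i*i) * bA q i)).
  2: { apply serC_scal; auto. }
  intros i.
  assert (Hb1 : (Cmod (cp q (S (i+i))) < 1)%R) by (apply cp_lt1; auto).
  assert (Hb2 : (Cmod (cp q (S (S (i+i)))) < 1)%R) by (apply cp_lt1; auto).
  assert (Hmb1 : (Cmod (- cp q (S (i+i))) < 1)%R) by (rewrite Cmod_opp; auto).
  assert (Hmb2 : (Cmod (- cp q (S (S (i+i)))) < 1)%R) by (rewrite Cmod_opp; auto).
  destruct (qp_conv _ _ Hmb1 Hp) as [_ [E1 [_ [HE1 _]]]].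
  destruct (qp_conv _ _ Hmb2 Hp) as [_ [E2 [_ [HE2 _]]]].
  assert (HEE := EE_prod q (i+i) E1 E2 W Hq HE1 HE2 HW).
  exists (fun j => cp q (2*i*i + j*j + 2*i*j) * (/ (qp (q*q) (q*q) i * qp (q*q) (q*q) j)) * E2). split.
  { intros j. apply euler_step with (S (S (i+i))); auto. intros k. rewrite den_conv, pow_n_cp.
    replace (2 * i * i + j * j + k * k + 2 * i * j + 2 * i * k + k)%nat with ((2 * i * i + j * j + 2 * i * j) + (2 * tri k + S (S (i + i)) * k))%nat
      by (pose proof (tri_eq k); nia).
    field; repeat split; apply qp_nz; auto. }
  replace (W * (cp (q * q) (i * i) * bA q i)) with (cp q (i * i + i * i) * (/ qp (q*q) (q*q) i * E2) * E1).
  2: { assert (Hq2 : qp (-q) q (i + i) <> 0). apply qp_nz; auto. rewrite Cmod_opp; auto.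
       replace W with (qp (- q) q (i + i) * (E1 * E2)) by auto. unfold bA.
       replace (cp q (i * i + i * i)) with (cp (q*q) (i*i)) by (rewrite cp_add, cp_mult; auto).
       field; repeat split; auto; apply qp_nz; auto. }
  apply euler_step with (S (i+i)); auto. intros j.
  replace (2 * i * i + j * j + 2 * i * j)%nat with ((i * i + i * i) + (2 * tri j + S (i + i) * j))%nat by (pose proof (tri_eq j); nia).
  field; repeat split; apply qp_nz; auto. Qed.

Lemma id2 q : (Cmod q < 1)%R ->
  exists S P1 P2 P3 Pq,
     is_series3 (fun i j k =>
       pow_n q (2*i*i + j*j + k*k + 2*i*j + 2*i*k + 2*i + j) /
       (qpoch (pow_n q 2) (pow_n q 2) i * qpoch (pow_n q 2) (pow_n q 2) j * qpoch (pow_n q 2) (pow_n q 2) k)) S /\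
     is_qpoch_inf (pow_n q 2) (pow_n q 7) P1 /\ is_qpoch_inf (pow_n q 5) (pow_n q 7) P2 /\
     is_qpoch_inf (pow_n q 7) (pow_n q 7) P3 /\ is_qpoch_inf q q Pq /\
     S = P1 * P2 * P3 / Pq.
Proof. intros Hq. assert (Hp : (Cmod (q*q) < 1)%R) by (apply CmodP_lt; auto).
  destruct (W_exists q Hq) as [W [Lq [HW [HLq [HW0 [HLq0 HLpp']]]]]].
  destruct (RS_B q Hq) as [SL [Lpp [Lz [Lw [LP [HSL [HLpp [Hz [Hw [HP HE]]]]]]]]]].
  assert (Lpp = Lq * W) by (apply (limC_unique _ _ _ HLpp HLpp')). subst Lpp.
  exists (W * SL), Lz, Lw, LP, Lq. split.
  2: { rewrite !pow_n_cp. split. apply to_qinf; auto. split. apply to_qinf; auto. split. apply to_qinf; auto. split. apply to_qinf; auto.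
       rewrite <- HE. field. auto. }
  apply triple_frame with (fun i => W * (cp (q*q) i * cp (q*q) (i*i) * bA q i)).
  2: { apply serC_scal; auto. }
  intros i.
  assert (Hb1 : (Cmod (cp q (S (i+i))) < 1)%R) by (apply cp_lt1; auto).
  assert (Hb2 : (Cmod (cp q (S (S (i+i)))) < 1)%R) by (apply cp_lt1; auto).
  assert (Hmb1 : (Cmod (- cp q (S (i+i))) < 1)%R) by (rewrite Cmod_opp; auto).
  assert (Hmb2 : (Cmod (- cp q (S (S (i+i)))) < 1)%R) by (rewrite Cmod_opp; auto).
  destruct (qp_conv _ _ Hmb1 Hp) as [_ [E1 [_ [HE1 _]]]].
  destruct (qp_conv _ _ Hmb2 Hp) as [_ [E2 [_ [HE2 _]]]].
  assert (HEE := EE_prod q (i+i) E1 E2 W Hq HE1 HE2 HW).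
  exists (fun j => cp q (2*i*i + j*j + 2*i*j + 2*i + j) * (/ (qp (q*q) (q*q) i * qp (q*q) (q*q) j)) * E1). split.
  { intros j. apply euler_step with (S (i+i)); auto. intros k. rewrite den_conv, pow_n_cp.
    replace (2 * i * i + j * j + k * k + 2 * i * j + 2 * i * k + 2 * i + j)%nat with ((2 * i * i + j * j + 2 * i * j + 2 * i + j) + (2 * tri k + S (i + i) * k))%nat
      by (pose proof (tri_eq k); nia).
    field; repeat split; apply qp_nz; auto. }
  replace (W * (cp (q * q) i * cp (q * q) (i * i) * bA q i)) with (cp q (i * i + i * i + i + i) * (/ qp (q*q) (q*q) i * E1) * E2).
  2: { assert (Hq2 : qp (-q) q (i + i) <> 0). apply qp_nz; auto. rewrite Cmod_opp; auto.
       replace W with (qp (- q) q (i + i) * (E1 * E2)) by auto. unfold bA.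
       replace (cp q (i * i + i * i + i + i)) with (cp (q*q) i * cp (q*q) (i*i)) by (rewrite !cp_add, !cp_mult; ring).
       field; repeat split; auto; apply qp_nz; auto. }
  apply euler_step with (S (S (i+i))); auto. intros j.
  replace (2 * i * i + j * j + 2 * i * j + 2 * i + j)%nat with ((i * i + i * i + i + i) + (2 * tri j + S (S (i + i)) * j))%nat by (pose proof (tri_eq j); nia).
  field; repeat split; apply qp_nz; auto. Qed.

Lemma id3 q : (Cmod q < 1)%R ->
  exists S P1 P2 P3 Pq,
     is_series3 (fun i j k =>
       pow_n q (2*i*i + j*j + k*k + 2*i*j + 2*i*k + 2*i + j + 2*k) /
       (qpoch (pow_n q 2) (pow_n q 2) i * qpoch (pow_n q 2) (pow_n q 2) j * qpoch (pow_n q 2) (pow_n q 2) k)) S /\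
     is_qpoch_inf (pow_n q 1) (pow_n q 7) P1 /\ is_qpoch_inf (pow_n q 6) (pow_n q 7) P2 /\
     is_qpoch_inf (pow_n q 7) (pow_n q 7) P3 /\ is_qpoch_inf q q Pq /\
     S = P1 * P2 * P3 / Pq.
Proof. intros Hq. assert (Hp : (Cmod (q*q) < 1)%R) by (apply CmodP_lt; auto).
  assert (H1q : 1 + q <> 0) by (apply op_nz; auto).
  destruct (W_exists q Hq) as [W [Lq [HW [HLq [HW0 [HLq0 HLpp']]]]]].
  destruct (RS_C q Hq) as [SL [Lpp [Lz [Lw [LP [HSL [HLpp [Hz [Hw [HP HE]]]]]]]]]].
  assert (Lpp = Lq * W) by (apply (limC_unique _ _ _ HLpp HLpp')). subst Lpp.
  exists (W / (1 + q) * SL), Lz, Lw, LP, Lq. split.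
  2: { rewrite !pow_n_cp. split. apply to_qinf; auto. split. apply to_qinf; auto. split. apply to_qinf; auto. split. apply to_qinf; auto.
       replace (Lz * Lw * LP) with (SL * (Lq * W) / (1 + q)) by (rewrite HE; field; auto). field. auto. }
  apply triple_frame with (fun i => W / (1 + q) * (cp (q*q) i * cp (q*q) (i*i) * bC q i)).
  2: { apply serC_scal; auto. }
  intros i.
  assert (Hb2 : (Cmod (cp q (S (S (i+i)))) < 1)%R) by (apply cp_lt1; auto).
  assert (Hb3 : (Cmod (cp q (S (S (S (i+i))))) < 1)%R) by (apply cp_lt1; auto).
  assert (Hmb2 : (Cmod (- cp q (S (S (i+i)))) < 1)%R) by (rewrite Cmod_opp; auto).
  assert (Hmb3 : (Cmod (- cp q (S (S (S (i+i))))) < 1)%R) by (rewrite Cmod_opp; auto).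
  destruct (qp_conv _ _ Hmb2 Hp) as [_ [E2 [_ [HE2 _]]]].
  destruct (qp_conv _ _ Hmb3 Hp) as [_ [E3 [_ [HE3 _]]]].
  assert (HEE := EE_prod q (S (i+i)) E2 E3 W Hq HE2 HE3 HW).
  exists (fun j => cp q (2*i*i + j*j + 2*i*j + 2*i + j) * (/ (qp (q*q) (q*q) i * qp (q*q) (q*q) j)) * E3). split.
  { intros j. apply euler_step with (S (S (S (i+i)))); auto. intros k. rewrite den_conv, pow_n_cp.
    replace (2 * i * i + j * j + k * k + 2 * i * j + 2 * i * k + 2 * i + j + 2 * k)%nat with ((2 * i * i + j * j + 2 * i * j + 2 * i + j) + (2 * tri k + S (S (S (i + i))) * k))%nat
      by (pose proof (tri_eq k); nia).
    field; repeat split; apply qp_nz; auto. }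
  replace (W / (1 + q) * (cp (q * q) i * cp (q * q) (i * i) * bC q i)) with (cp q (i * i + i * i + i + i) * (/ qp (q*q) (q*q) i * E3) * E2).
  2: { assert (Hq2 : qp (-(q*q)) q (i + i) <> 0). apply qp_nz; auto. rewrite Cmod_opp; auto.
       replace W with (qp (- q) q (S (i + i)) * (E2 * E3)) by auto. unfold bC.
       rewrite qp_S_left. replace (- q * q) with (-(q*q)) by ring.
       replace (cp q (i * i + i * i + i + i)) with (cp (q*q) i * cp (q*q) (i*i)) by (rewrite !cp_add, !cp_mult; ring).
       field; repeat split; auto; try (apply qp_nz; auto); try (replace (1 - - q) with (1 + q) by ring; auto). }
  apply euler_step with (S (S (i+i))); auto. intros j.
  replace (2 * i * i + j * j + 2 * i * j + 2 * i + j)%nat with ((i * i + i * i + i + i) + (2 * tri j + S (S (i + i)) * j))%nat by (pose proof (tri_eq j); nia).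
  field; repeat split; apply qp_nz; auto. Qed.

Theorem theorem4p5 (q : C) (hq : (Cmod q < 1)%R) :
  let q2 := pow_n q 2 in
  let q7 := pow_n q 7 in
  let den (i j k : nat) := qpoch q2 q2 i * qpoch q2 q2 j * qpoch q2 q2 k in
  (exists S P1 P2 P3 Pq,
     is_series3 (fun i j k =>
       pow_n q (2*i*i + j*j + k*k + 2*i*j + 2*i*k + k) / den i j k) S /\
     is_qpoch_inf (pow_n q 3) q7 P1 /\ is_qpoch_inf (pow_n q 4) q7 P2 /\
     is_qpoch_inf (pow_n q 7) q7 P3 /\ is_qpoch_inf q q Pq /\
     S = P1 * P2 * P3 / Pq) /\
  (exists S P1 P2 P3 Pq,
     is_series3 (fun i j k =>
       pow_n q (2*i*i + j*j + k*k + 2*i*j + 2*i*k + 2*i + j) / den i j k) S /\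
     is_qpoch_inf (pow_n q 2) q7 P1 /\ is_qpoch_inf (pow_n q 5) q7 P2 /\
     is_qpoch_inf (pow_n q 7) q7 P3 /\ is_qpoch_inf q q Pq /\
     S = P1 * P2 * P3 / Pq) /\
  (exists S P1 P2 P3 Pq,
     is_series3 (fun i j k =>
       pow_n q (2*i*i + j*j + k*k + 2*i*j + 2*i*k + 2*i + j + 2*k) / den i j k) S /\
     is_qpoch_inf (pow_n q 1) q7 P1 /\ is_qpoch_inf (pow_n q 6) q7 P2 /\
     is_qpoch_inf (pow_n q 7) q7 P3 /\ is_qpoch_inf q q Pq /\
     S = P1 * P2 * P3 / Pq).
Proof.
  cbv zeta. split. exact (id1 q hq). split. exact (id2 q hq). exact (id3 q hq).
Qed.
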